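(* Let $(\mathcal{A},\mathbb{E})$ be a $B$-valued probability space, $\chi:[n]\to\{\mathcal{F},\mathcal{B}\}$, $\pi\in INC(\chi)$ and $a_1,\dots,a_n\in\mathcal{A}$. Suppose $V=\{l+1,l+2,\dots,l+s\}$ is an interval block of $\pi$ and let $V'=[n]\setminus V$. Then $$\kappa_{\chi,\pi}(a_1,\dots,a_n)=\kappa_{\chi|_{V'},\pi|_{V'}}\big(a_1,\dots,a_l,\kappa_{\chi|_V,1_V}(a_{l+1},\dots,a_{l+s})a_{l+s+1},\dots,a_n\big)=\kappa_{\chi|_{V'},\pi|_{V'}}\big(a_1,\dots,a_l\kappa_{\chi|_V,1_V}(a_{l+1},\dots,a_{l+s}),a_{l+s+1},\dots,a_n\big).$$
   Context: $B$ is a unital complex algebra; a $B$-valued probability space is a pair $(\mathcal{A},\mathbb{E})$ with $\mathcal{A}$ a unital algebra containing $B$ and $\mathbb{E}:\mathcal{A}\to B$ linear with $\mathbb{E}(b_1ab_2)=b_1\mathbb{E}(a)b_2$. For a finite linearly ordered set $S$ and $\chi:S\to\{\mathcal{F},\mathcal{B}\}$, $INC(\chi)$ is the set of noncrossing partitions $\pi$ of $S$ such that whenever $v_1<w<v_2$, $v_1,v_2$ are in the same block and $\chi(w)=\mathcal{B}$, then $w$ is in that block; it is ordered by reverse refinement ($\sigma\le\pi$ iff every block of $\sigma$ lies in a block of $\pi$), $\mu_{INC}$ is its Möbius function, and $1_S$ is the one-block partition. Restrictions $\chi|_W$, $\pi|_W$ to a subset $W$ are taken with the induced order. For a noncrossing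 $\sigma$ of $[n]$ and $a_1,\dots,a_n\in\mathcal{A}$, $\Phi_\sigma(a_1,\dots,a_n)\in B$ is defined recursively: $\Phi_{1_n}(a_1,\dots,a_n)=\mathbb{E}(a_1\cdots a_n)$ and, if $W=\{l+1,\dots,l+s\}$ is an interval block of $\sigma$, $\Phi_\sigma(a_1,\dots,a_n)=\Phi_{\sigma\setminus\{W\}}(a_1,\dots,a_l,\mathbb{E}(a_{l+1}\cdots a_{l+s})a_{l+s+1},\dots,a_n)$. The free-Boolean cumulant is $\kappa_{\chi,\pi}(a_1,\dots,a_n)=\sum_{\sigma\in INC(\chi),\sigma\le\pi}\mu_{INC}(\sigma,\pi)\Phi_\sigma(a_1,\dots,a_n)$. *)

(* Defs.v *)
From HB Require Import structures.
From mathcomp Require Import all_boot all_order all_algebra.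
From mathcomp Require Import reals.
From mathcomp.real_closed Require Export complex.
Set Implicit Arguments. Unset Strict Implicit. Unset Printing Implicit Defensive.
Import Order.TTheory GRing.Theory Num.Theory.
Local Open Scope ring_scope.

(* The two colours: F = free (\mathcal F), Bo = Boolean (\mathcal B). *)
Inductive FB := F | Bo.
Definition isB (c : FB) : bool := if c is Bo then true else false.

Section Partitions.
Variable n : nat.
Implicit Types (S W : {set 'I_n}) (P Q : {set {set 'I_n}}) (chi : 'I_n -> FB).

Definition noncrossing P : bool :=
  [forall X in P, forall Y in P, forall a : 'I_n, forall b : 'I_n,
    forall c : 'I_n, forall d : 'I_n,
    ([&& a \in X, c \in X, b \in Y, d \in Y & (a < b < c)%N && (c < d)%N])
      ==> (X == Y)].

Definition inc_cond S chi P : bool :=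
  [forall X in P, forall v1 in X, forall v2 in X, forall w in S,
    ((v1 < w < v2)%N && isB (chi w)) ==> (w \in X)].

Definition INC S chi P : bool :=
  [&& partition P S, noncrossing P & inc_cond S chi P].

Definition refines P Q : bool := [forall X in P, exists Y in Q, X \subset Y].

Definition part_restrict P W : {set {set 'I_n}} :=
  [set X :&: W | X in P & X :&: W != set0].

Definition is_interval S W : bool :=
  [forall x in S, forall y in W, forall z in W, (y <= x <= z)%N ==> (x \in W)].

Definition next_after S W : option 'I_n :=
  [pick j in S | [forall w in W, (w < j)%N] &&
     [forall x in S, [forall w in W, (w < x)%N] ==> (j <= x)%N]].
End Partitions.

(* The fuel #|T| exceeds the length of every strict chain, so this is the
   genuine Moebius function whenever le is a partial order on dom. *)
Section Mobius.
Variables (T : finType) (dom : pred T) (le : rel T).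
Fixpoint mobius_fuel (k : nat) (x y : T) : int :=
  match k with
  | 0 => (x == y)%:Z
  | k'.+1 =>
    if x == y then 1
    else if le x y then
      - \sum_(z | [&& dom z, le x z, le z y & z != y]) mobius_fuel k' x z
    else 0
  end.
Definition mobius (x y : T) : int := mobius_fuel #|T| x y.
End Mobius.

Section Cumulants.
Variables (R : realType) (Bt A : algType R[i]).
Variables (iota : Bt -> A) (E : A -> Bt).
Variable n : nat.

Fixpoint Phi_fuel (k : nat) (S : {set 'I_n}) (sigma : {set {set 'I_n}})
    (a : 'I_n -> A) : Bt :=
  match k with
  | 0 => E (\prod_(i <- enum S) a i)
  | k'.+1 =>
    match [pick W in sigma | is_interval S W && (next_after S W != None)] with
    | None => E (\prod_(i <- enum S) a i)
    | Some W =>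
      match next_after S W with
      | None => E (\prod_(i <- enum S) a i)
      | Some j =>
        Phi_fuel k' (S :\: W) (sigma :\ W)
          (fun i => if i == j then iota (E (\prod_(w <- enum W) a w)) * a i
                    else a i)
      end
    end
  end.

Definition Phi (S : {set 'I_n}) (sigma : {set {set 'I_n}}) (a : 'I_n -> A) : Bt := Phi_fuel #|sigma| S sigma a.

Definition kappa (S : {set 'I_n}) (chi : 'I_n -> FB) (pi : {set {set 'I_n}})
    (a : 'I_n -> A) : Bt :=
  \sum_(sigma : {set {set 'I_n}} | INC S chi sigma && refines sigma pi)
     Phi S sigma a *~ mobius (INC S chi) (@refines n) sigma pi.
End Cumulants.

(* Main.v *)
Require Import Defs.
From HB Require Import structures.
From mathcomp Require Import all_boot all_order all_algebra.
From mathcomp Require Import reals.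
From mathcomp.real_closed Require Import complex.
From mathcomp Require Import zify.

Module MP1.
Import Order.TTheory GRing.Theory Num.Theory.
Set Implicit Arguments. Unset Strict Implicit. Unset Printing Implicit Defensive.

Section Comb.
Variable n : nat.
Implicit Types (S W V X Y : {set 'I_n}) (P Q : {set {set 'I_n}}).

Definition good S P : Prop :=
  [/\ forall X, X \in P -> X \subset S,
      forall X, X \in P -> exists x, x \in X,
      forall X Y x, X \in P -> Y \in P -> x \in X -> x \in Y -> X = Y
    & forall x, x \in S -> exists2 X, X \in P & x \in X].

Lemma partition_good S P : partition P S -> good S P.
Proof.
case/and3P=> /eqP cov triv n0; split.
- move=> X XP; rewrite -cov; exact: bigcup_sup.
- move=> X XP; apply/set0Pn; apply: contraNneq n0 => <-; exact: XP.
- move=> X Y x XP YP xX xY; apply/eqP; apply: contraTT isT => XY.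
  have := trivIsetP triv X Y XP YP XY => /disjoint_setI0 /setP /(_ x).
  by rewrite inE xX xY in_set0.
- by move=> x; rewrite -cov => /bigcupP[X XP xX]; exists X.
Qed.

Lemma good_partition S P : good S P -> partition P S.
Proof.
case=> sub ne dis cov; apply/and3P; split.
- apply/eqP/setP=> x; apply/bigcupP/idP => [[X XP xX]|xS].
  + exact: (subsetP (sub X XP)).
  + by case: (cov x xS) => X XP xX; exists X.
- apply/trivIsetP => X Y XP YP XY; rewrite -setI_eq0; apply/eqP/setP => x.
  rewrite inE in_set0; apply/negbTE/negP=> /andP[xX xY].
  by move/eqP: XY; apply; apply: (dis X Y x).
- by apply/negP => P0; case: (ne _ P0) => x; rewrite in_set0.
Qed.

Lemma good_D S P W : good S P -> W \in P -> good (S :\: W) (P :\ W).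
Proof.
case=> sub ne dis cov WP; split.
- move=> X; rewrite !inE => /andP[XW XP]; apply/subsetP => x xX.
  rewrite inE (subsetP (sub X XP)) // andbT; apply/negP => xW.
  by move/eqP: XW; apply; apply: (dis X W x).
- by move=> X; rewrite !inE => /andP[_ XP]; apply: ne.
- by move=> X Y x; rewrite !inE => /andP[_ XP] /andP[_ YP]; apply: dis.
- move=> x; rewrite inE => /andP[xW xS]; case: (cov x xS) => X XP xX.
  exists X => //; rewrite !inE XP andbT; apply/eqP => XW.
  by rewrite -XW xX in xW.
Qed.

Definition isnext S W (t : 'I_n) :=
  [/\ t \in S, forall w, w \in W -> (w < t)%N &
      forall x, x \in S -> (forall w, w \in W -> (w < x)%N) -> (t <= x)%N].

Definition isprev S W (p : 'I_n) :=
  [/\ p \in S, forall w, w \in W -> (p < w)%N &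
      forall x, x \in S -> (forall w, w \in W -> (x < w)%N) -> (x <= p)%N].

Lemma next_afterP S W t : isnext S W t -> next_after S W = Some t.
Proof.
case=> tS tW tmin; rewrite /next_after; case: pickP => [j /andP[jS /andP[H1 H2]]|H].
- congr Some; apply/val_inj/eqP; rewrite eqn_leq; apply/andP; split.
  + by move/forall_inP: H2 => /(_ t tS) /implyP; apply; apply/forall_inP.
  + by apply: tmin => // w wW; move/forall_inP: H1; apply.
- have := H t; rewrite tS /=; move/negbT; rewrite negb_and => /orP[] /negP[].
  + by apply/forall_inP.
  + apply/forall_inP => x xS; apply/implyP => /forall_inP Hx; exact: tmin.
Qed.

Lemma next_afterE S W t : next_after S W = Some t -> isnext S W t.
Proof.
rewrite /next_after; case: pickP => [j /andP[jS /andP[H1 H2]] [<-]|//].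
split=> //; first by move=> w; move/forall_inP: H1; apply.
move=> x xS Hx; move/forall_inP: H2 => /(_ x xS) /implyP; apply.
by apply/forall_inP.
Qed.

Lemma next_after_None S W : next_after S W = None ->
  forall x, x \in S -> ~ (forall w, w \in W -> (w < x)%N).
Proof.
move=> H x xS Hx.
have [t tn] : exists t, isnext S W t.
  pose P := [pred y | (y \in S) && [forall w in W, (w < y)%N]].
  have Px : P x by rewrite /P /= xS; apply/forall_inP.
  case: (arg_minnP (fun y : 'I_n => nat_of_ord y) Px) => t /andP[tS /forall_inP tW] tmin.
  exists t; split=> // y yS Hy; apply: tmin; rewrite /= yS; exact/forall_inP.
by rewrite (next_afterP tn) in H.
Qed.

Lemma ex_next S W x : x \in S -> (forall w, w \in W -> (w < x)%N) ->
  exists t, isnext S W t.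
Proof.
move=> xS Hx; case E: (next_after S W) => [t|]; first by exists t; exact: next_afterE.
by case: (next_after_None E xS Hx).
Qed.

Lemma ex_prev S W x : x \in S -> (forall w, w \in W -> (x < w)%N) ->
  exists p, isprev S W p.
Proof.
move=> xS Hx.
pose P := [pred y | (y \in S) && [forall w in W, (y < w)%N]].
have Px : P x by rewrite /P /= xS; apply/forall_inP.
case: (arg_maxnP (fun y : 'I_n => nat_of_ord y) Px) => t /andP[tS /forall_inP tW] tmax.
exists t; split=> // y yS Hy; apply: tmax; rewrite /= yS; exact/forall_inP.
Qed.

Lemma intervalP S W : reflect (forall x y z, x \in S -> y \in W -> z \in W ->
   (y <= x)%N -> (x <= z)%N -> x \in W) (is_interval S W).
Proof.
apply: (iffP idP).
- move=> /forall_inP H x y z xS yW zW yx xz.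
  by move: (H x xS) => /forall_inP /(_ y yW) /forall_inP /(_ z zW) /implyP; apply; rewrite yx.
- move=> H; apply/forall_inP => x xS; apply/forall_inP => y yW; apply/forall_inP => z zW.
  by apply/implyP => /andP[]; apply: H.
Qed.

End Comb.

End MP1.
Import MP1.

Module MP2.
Import Order.TTheory GRing.Theory Num.Theory.
Set Implicit Arguments. Unset Strict Implicit. Unset Printing Implicit Defensive.
Local Open Scope ring_scope.

Section Prod.
Variable (A : ringType) (n : nat).
Implicit Types (s : seq 'I_n) (a : 'I_n -> A).

Definition upd a (j : 'I_n) (x : A) := fun i => if i == j then x else a i.
Definition ltO := fun i j : 'I_n => (i < j)%N.
Lemma ltO_trans : transitive ltO.
Proof. by move=> x y z; apply: ltn_trans. Qed.

Lemma enum_sorted (W : {set 'I_n}) : sorted ltO (enum W).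
Proof.
rewrite /enum_mem -enumT; apply: sorted_filter; first exact: ltO_trans.
by have := iota_ltn_sorted 0 n; rewrite -val_enum_ord sorted_map.
Qed.

Lemma prod_out s a j x : j \notin s -> \prod_(i <- s) upd a j x i = \prod_(i <- s) a i.
Proof.
move=> js; apply: eq_big_seq => i iS; rewrite /upd; case: eqP => // ij.
by rewrite -ij iS in js.
Qed.

Lemma prod_min s a t y : sorted ltO s -> t \in s -> (forall w, w \in s -> (t <= w)%N) ->
  \prod_(i <- s) upd a t (y * a t) i = y * \prod_(i <- s) a i.
Proof.
case: s => [//|x s] /= Hs; have Hall := order_path_min ltO_trans Hs.
rewrite in_cons => ts Hmin; rewrite !big_cons.
case: (x =P t) => [xt|xt].
  subst x; rewrite /upd eqxx prod_out ?mulrA //.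
  by apply/negP => /(allP Hall); rewrite /ltO ltnn.
move: ts; rewrite (introF eqP (nesym xt)) /= => ts.
have := Hmin x; rewrite mem_head => /(_ isT); have := allP Hall t ts.
by rewrite /ltO => /leq_trans H /H; rewrite ltnn.
Qed.

Lemma prod_max s a p y : sorted ltO s -> p \in s -> (forall w, w \in s -> (w <= p)%N) ->
  \prod_(i <- s) upd a p (a p * y) i = \prod_(i <- s) a i * y.
Proof.
elim: s => [//|x s IH] /= Hs; have Hall := order_path_min ltO_trans Hs.
rewrite in_cons => ps Hmax; rewrite !big_cons.
case: (x =P p) => [xp|xp].
  subst x; case: s {IH} Hs Hall ps Hmax => [|z s] Hs Hall ps Hmax.
    by rewrite !big_nil /upd eqxx !mulr1.
  have := Hmax z; rewrite !in_cons eqxx orbT => /(_ isT).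
  by move: Hall => /andP[+ _]; rewrite /ltO => /leq_trans H /H; rewrite ltnn.
move: ps; rewrite (introF eqP (nesym xp)) /= => ps.
rewrite {1}/upd (introF eqP xp) IH ?mulrA //; first exact: path_sorted Hs.
by move=> w ws; apply: Hmax; rewrite in_cons ws orbT.
Qed.

Lemma prod_adj s a p j y : sorted ltO s -> p \in s -> j \in s -> (p < j)%N ->
  (forall x, x \in s -> ~~ ((p < x)%N && (x < j)%N)) ->
  \prod_(i <- s) upd a p (a p * y) i = \prod_(i <- s) upd a j (y * a j) i.
Proof.
elim: s => [//|x s IH] /= Hs; have Hall := order_path_min ltO_trans Hs.
rewrite !in_cons => ps js pj Hc; rewrite !big_cons.
have pnj : p != j by rewrite neq_ltn pj.
case: (x =P p) => [xp|xp].
  subst x; case: s IH Hs Hall ps js Hc => [|z s] IH Hs Hall ps js Hc.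
    by move: js; rewrite in_nil orbF eq_sym (negbTE pnj).
  move: js; rewrite eq_sym (negbTE pnj) /= => js.
  have zj : z = j.
    move: Hall => /= /andP[pz Hall']; apply/val_inj/eqP; rewrite eqn_leq.
    apply/andP; split.
      move: js; rewrite in_cons => /orP[/eqP->//|js].
      have := order_path_min ltO_trans (path_sorted Hs) => /allP /(_ j js).
      by rewrite /ltO => /ltnW.
    have := Hc z; rewrite !in_cons eqxx orbT => /(_ isT).
    by move: pz; rewrite /ltO => -> /=; rewrite -leqNgt.
  subst z; rewrite !big_cons /upd eqxx (negbTE pnj) eq_sym (negbTE pnj) eqxx.
  have Hj : j \notin s.
    apply/negP => js'; have := allP (order_path_min ltO_trans (path_sorted Hs)) j js'.
    by rewrite /ltO ltnn.
  have Hp : p \notin s.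
    apply/negP => ps'; have := allP (order_path_min ltO_trans Hs) p.
    by rewrite in_cons ps' orbT => /(_ isT); rewrite /ltO ltnn.
  rewrite -/(upd a p (a p * y)) -/(upd a j (y * a j)) !prod_out //.
  by rewrite !mulrA.
move: ps; rewrite (introF eqP (nesym xp)) /= => ps.
have xj : x != j.
  apply/eqP => xj; subst x; have := allP Hall p ps.
  by rewrite /ltO => /(ltn_trans pj); rewrite ltnn.
rewrite /upd (introF eqP xp) (negbTE xj) -/(upd a p (a p * y)) -/(upd a j (y * a j)).
rewrite IH //; first exact: path_sorted Hs.
- by move: js; rewrite eq_sym (negbTE xj).
- by move=> z zs; apply: Hc; rewrite in_cons zs orbT.
Qed.

Lemma prod_lin s a j x y : uniq s -> j \in s ->
  \prod_(i <- s) upd a j (x + y) i = \prod_(i <- s) upd a j x i + \prod_(i <- s) upd a j y i.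
Proof.
elim: s => [//|z s IH] /= /andP[zs us]; rewrite in_cons !big_cons.
case: (z =P j) => [zj _|zj js].
  subst z; rewrite /upd eqxx -!/(upd a j _) !prod_out // mulrDl //.
rewrite /upd (introF eqP zj) -!/(upd a j _) IH ?mulrDr //.
by move: js; rewrite eq_sym (introF eqP zj).
Qed.

End Prod.

End MP2.
Import MP2.

Module MP3.
Import Order.TTheory GRing.Theory Num.Theory.
Set Implicit Arguments. Unset Strict Implicit. Unset Printing Implicit Defensive.

Section Geom.
Variable n : nat.
Implicit Types (S W V X Y : {set 'I_n}) (P Q : {set {set 'I_n}}).

Lemma interval_sub S S' W : is_interval S W -> S' \subset S -> is_interval S' W.
Proof.
move=> /intervalP H sub; apply/intervalP => x y z xS; apply: H.
exact: (subsetP sub).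
Qed.

Lemma isnext_D S W X t : isnext S W t -> t \notin X -> isnext (S :\: X) W t.
Proof.
case=> tS tW tmin tX; split => //; first by rewrite inE tX.
by move=> x; rewrite inE => /andP[_ xS]; apply: tmin.
Qed.

Lemma isprev_D S W X t : isprev S W t -> t \notin X -> isprev (S :\: X) W t.
Proof.
case=> tS tW tmin tX; split => //; first by rewrite inE tX.
by move=> x; rewrite inE => /andP[_ xS]; apply: tmin.
Qed.

Lemma isnext_uniq S W t t' : isnext S W t -> isnext S W t' -> t = t'.
Proof. by move=> /next_afterP H1 /next_afterP; rewrite H1 => -[]. Qed.

Lemma side S W W0 w0 : W \subset S -> W0 \subset S -> is_interval S W ->
  [disjoint W & W0] -> w0 \in W0 -> forall w, w \in W -> (w < w0)%N ->
  forall w', w' \in W -> (w' < w0)%N.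
Proof.
move=> WS W0S /intervalP WI dis w0W0 w wW ww0 w' w'W.
rewrite ltnNge; apply/negP => w0w'.
have : w0 \in W by apply: (WI w0 w w') => //; [exact: (subsetP W0S) | exact: ltnW].
by move=> w0W; move: (disjointFr dis w0W); rewrite w0W0.
Qed.

Lemma next_neq S W W0 t t0 : W \subset S -> W0 \subset S ->
  is_interval S W -> is_interval S W0 -> [disjoint W & W0] ->
  (exists w, w \in W) -> (exists w, w \in W0) ->
  isnext S W t -> isnext S W0 t0 -> t != t0.
Proof.
move=> WS W0S WI W0I dis [w wW] [w0 w0W0] [tS tW tmin] [t0S t0W t0min].
apply/eqP => tt0; subst t0.
have ww0 : w != w0.
  by apply/eqP => e; subst w0; move: (disjointFr dis wW); rewrite w0W0.
case: (ltngtP w w0) => [lt|lt|/val_inj e]; last by rewrite e eqxx in ww0.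
- have H := side WS W0S WI dis w0W0 wW lt.
  have := tmin w0 (subsetP W0S _ w0W0) H; have := t0W w0 w0W0.
  by move=> /leq_trans H1 /H1; rewrite ltnn.
- have dis' : [disjoint W0 & W] by rewrite disjoint_sym.
  have H' := side W0S WS W0I dis' wW w0W0 lt.
  have := t0min w (subsetP WS _ wW) H'; have := tW w wW.
  by move=> /leq_trans H1 /H1; rewrite ltnn.
Qed.

Lemma good_disj S P X Y : good S P -> X \in P -> Y \in P -> X != Y -> [disjoint X & Y].
Proof.
case=> _ _ dis _ XP YP XY; rewrite -setI_eq0; apply/eqP/setP => x.
rewrite inE in_set0; apply/negbTE/negP=> /andP[xX xY].
by move/eqP: XY; apply; apply: (dis X Y x).
Qed.

Lemma good_sub S P X : good S P -> X \in P -> X \subset S.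
Proof. by case=> H _ _ _; apply: H. Qed.

Lemma good_ne S P X : good S P -> X \in P -> exists x, x \in X.
Proof. by case=> _ H _ _; apply: H. Qed.

Lemma next_min S W W0 t : isnext S W t -> W \subset S -> W0 \subset S ->
  is_interval S W0 -> t \in W0 -> [disjoint W & W0] -> forall x, x \in W0 -> (t <= x)%N.
Proof.
move=> [tS tW tmin] WS W0S /intervalP W0I tW0 dis x xW0.
rewrite leqNgt; apply/negP => xt.
have xS := subsetP W0S x xW0.
case: (boolP [forall w in W, (w < x)%N]) => [/forall_inP H|].
  by have := tmin x xS H; rewrite leqNgt xt.
move/forall_inPn => [w wW]; rewrite -leqNgt => xw.
have : w \in W0.
  by apply: (W0I w x t) => //; [exact: (subsetP WS w wW) | exact: ltnW (tW w wW)].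
by rewrite (disjointFr dis wW).
Qed.

Lemma next_shift S W W0 t t0 : isnext S W t -> t \in W0 -> isnext S W0 t0 ->
  is_interval S W0 -> isnext (S :\: W0) W t0.
Proof.
move=> [tS tW tmin] tW0 [t0S t0W0 t0min] /intervalP W0I; split.
- rewrite inE t0S andbT; apply/negP => h; by have := t0W0 t0 h; rewrite ltnn.
- move=> w wW; exact: ltn_trans (tW w wW) (t0W0 t tW0).
- move=> x; rewrite inE => /andP[xW0 xS] Hx; have tx := tmin x xS Hx.
  case: (boolP [forall y in W0, (y < x)%N]) => [/forall_inP H|]; first exact: t0min.
  move/forall_inPn => [y yW0]; rewrite -leqNgt => xy.
  have : x \in W0 by apply: (W0I x t y).
  by rewrite (negbTE xW0).
Qed.

End Geom.

End MP3.
Import MP3.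

Module MP5.
Set Implicit Arguments. Unset Strict Implicit. Unset Printing Implicit Defensive.

Section Geom2.
Variable n : nat.
Implicit Types (S W V X Y : {set 'I_n}) (P Q : {set {set 'I_n}}).

Definition consec S (p j : 'I_n) :=
  [/\ p \in S, j \in S, (p < j)%N & forall x, x \in S -> ~~ ((p < x)%N && (x < j)%N)].

Lemma consec_sub S S' p j : consec S p j -> S' \subset S -> p \in S' -> j \in S' -> consec S' p j.
Proof.
case=> _ _ pj H sub pS jS; split => // x xS; apply: H; exact: (subsetP sub).
Qed.

Lemma adj_t_ne_j S W p j t : consec S p j -> W \subset S -> (exists w, w \in W) ->
  isnext S W t -> p \notin W -> t != j.
Proof.
case=> pS jS pj Hc WS [w wW] [tS tW tmin] pW; apply/eqP => tj; subst t.
case: (boolP [forall w in W, (w < p)%N]) => [/forall_inP H|].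
  by have := tmin p pS H; rewrite leqNgt pj.
move/forall_inPn => [w' w'W]; rewrite -leqNgt => pw'.
have pw'' : (p < w')%N.
  rewrite ltn_neqAle pw' andbT; apply: (contraNneq _ pW) => e.
  by rewrite (val_inj e).
have := Hc w' (subsetP WS _ w'W); rewrite pw'' (tW w' w'W).
done.
Qed.

Lemma adj_next S W p j : consec S p j -> is_interval S W -> p \in W -> j \notin W ->
  isnext S W j.
Proof.
case=> pS jS pj Hc /intervalP WI pW jW; split => //.
- move=> w wW; rewrite ltnNge; apply/negP => jw.
  by have := WI j p w jS pW wW (ltnW pj) jw; rewrite (negbTE jW).
- move=> x xS Hx; have px := Hx p pW; have := Hc x xS; rewrite px /= -leqNgt.
  done.
Qed.

Lemma adj_pmax S W p j : consec S p j -> W \subset S -> is_interval S W -> p \in W ->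
  j \notin W -> forall w, w \in W -> (w <= p)%N.
Proof.
case=> pS jS pj Hc WS /intervalP WI pW jW w wW; rewrite leqNgt; apply/negP => pw.
have := Hc w (subsetP WS _ wW); rewrite pw /= -leqNgt => jw.
by have := WI j p w jS pW wW (ltnW pj) jw; rewrite (negbTE jW).
Qed.

Lemma adj_jmin S W p j : consec S p j -> W \subset S -> is_interval S W -> j \in W ->
  p \notin W -> forall w, w \in W -> (j <= w)%N.
Proof.
case=> pS jS pj Hc WS /intervalP WI jW pW w wW; rewrite leqNgt; apply/negP => wj.
have := Hc w (subsetP WS _ wW); rewrite wj andbT -leqNgt => wp.
by have := WI p w j pS wW jW wp (ltnW pj); rewrite (negbTE pW).
Qed.

Lemma adj_consec S W p j t : consec S p j -> W \subset S -> is_interval S W ->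
  j \in W -> p \notin W -> isnext S W t -> consec (S :\: W) p t.
Proof.
move=> C WS WI jW pW [tS tW tmin]; move: (C) => [pS jS pj Hc].
have jt := tW j jW.
split.
- by rewrite inE pW.
- by rewrite inE tS andbT; apply/negP => /tW; rewrite ltnn.
- exact: ltn_trans pj jt.
- move=> x; rewrite inE => /andP[xW xS]; apply/negP => /andP[px xt].
  have jx : (j <= x)%N by have := Hc x xS; rewrite px /= -leqNgt.
  case: (boolP [forall w in W, (w < x)%N]) => [/forall_inP H|].
    by have := tmin x xS H; rewrite leqNgt xt.
  move/forall_inPn => [w wW]; rewrite -leqNgt => xw.
  move/intervalP: WI => WI.
  by have := WI x j w xS jW wW jx xw; rewrite (negbTE xW).
Qed.

Lemma ncP P X Y (a b c d : 'I_n) : noncrossing P -> X \in P -> Y \in P ->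
  a \in X -> c \in X -> b \in Y -> d \in Y -> (a < b)%N -> (b < c)%N -> (c < d)%N -> X = Y.
Proof.
move=> /forall_inP /(_ X) H XP YP aX cX bY dY ab bc cd.
move: (H XP) => /forall_inP /(_ Y YP) /forallP /(_ a) /forallP /(_ b) /forallP /(_ c)
  /forallP /(_ d) /implyP; rewrite aX cX bY dY ab bc cd /= => /(_ isT) /eqP //.
Qed.

Lemma ex_max S (x : 'I_n) : x \in S -> exists2 m, m \in S & forall y, y \in S -> (y <= m)%N.
Proof.
move=> xS; case: (arg_maxnP (fun y : 'I_n => nat_of_ord y) xS) => m mS H.
by exists m.
Qed.

Definition hull S X := [set x in S | [exists y in X, exists z in X, (y <= x <= z)%N]].

Lemma ex_elig S P : good S P -> noncrossing P -> (1 < #|P|)%N ->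
  exists2 W, W \in P & is_interval S W /\ exists t, isnext S W t.
Proof.
move=> gP nc cP; move: (gP) => [sub ne dis cov].
have [X1 X1P] : exists X, X \in P.
  have : (0 < #|P|)%N by exact: ltnW cP.
  by rewrite card_gt0 => /set0Pn.
have [x1 x1X] := ne X1 X1P.
have [m mS mmax] := ex_max (subsetP (sub X1 X1P) x1 x1X).
have [Pm PmP mPm] := cov m mS.
have [X2 X2P mX2] : exists2 X, X \in P & m \notin X.
  have : (0 < #|P :\ Pm|)%N by move: cP; rewrite (cardsD1 Pm) PmP.
  rewrite card_gt0 => /set0Pn[X]; rewrite !inE => /andP[XPm XP].
  exists X => //; apply/negP => mX; move/eqP: XPm; apply; exact: (dis X Pm m XP PmP mX mPm).
pose Q := [pred X | (X \in P) && (m \notin X)].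
have QX2 : Q X2 by rewrite /Q /= X2P.
case: (arg_minnP (fun X => #|hull S X|) QX2) => X0 /andP[X0P mX0] X0min.
exists X0 => //; split; last first.
  apply: (ex_next mS) => w wX0; rewrite ltn_neqAle mmax ?andbT.
    by apply: contraNneq mX0 => /val_inj <-.
  exact: (subsetP (sub X0 X0P)).
apply/intervalP => x y z xS yX zX yx xz; apply/negPn/negP => xX.
have [Y YP xY] := cov x xS.
have YX0 : Y <> X0 by move=> e; rewrite -e xY in xX.
have neqX (u v : 'I_n) : u \in X0 -> v \notin X0 -> (u : nat) <> v.
  by move=> uX vX e; move: vX; rewrite -(val_inj e) uX.
have yx' : (y < x)%N by rewrite ltn_neqAle yx andbT; apply/eqP; exact: neqX.
have xz' : (x < z)%N by rewrite ltn_neqAle xz andbT; apply/eqP => /esym; apply: neqX.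
have mY : m \notin Y.
  apply/negP => mY; have zm : (z < m)%N.
    rewrite ltn_neqAle mmax ?andbT; first by apply/eqP; exact: neqX.
    exact: (subsetP (sub X0 X0P)).
  by have := ncP nc X0P YP yX zX xY mY yx' xz' zm => /esym.
have inY u : u \in Y -> (y < u)%N && (u < z)%N.
  move=> uY.
  have uX0 : u \notin X0 by apply/negP => uX0; apply: YX0; exact: (dis Y X0 u YP X0P uY uX0).
  have yu : (y : nat) <> u by apply: neqX.
  have uz : (u : nat) <> z by move=> e; apply: (neqX z u) => //; rewrite e.
  case: (ltngtP u y) => [uy|yu'|e].
  - by exfalso; have := ncP nc YP X0P uY xY yX zX uy yx' xz'.
  - case: (ltngtP u z) => [uz'|zu|e].
    + by apply/andP.
    + by exfalso; have := ncP nc X0P YP yX zX xY uY yx' xz' zu => /esym.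
    + by exfalso; apply: uz.
  - by exfalso; apply: yu; rewrite e.
have QY : Q Y by rewrite /Q /= YP.
have := X0min Y QY; rewrite leqNgt => /negP; apply.
apply: proper_card; apply/properP; split.
  apply/subsetP => v; rewrite !inE => /andP[vS /existsP[y' /andP[y'Y /existsP[z' /andP[z'Y /andP[y'v vz']]]]]].
  rewrite vS /=; apply/existsP; exists y; rewrite yX /=; apply/existsP; exists z; rewrite zX /=.
  have /andP[yy' _] := inY y' y'Y; have /andP[_ z'z] := inY z' z'Y.
  by rewrite (ltnW (leq_trans yy' y'v)) (ltnW (leq_ltn_trans vz' z'z)).
exists y.
  rewrite inE (subsetP (sub X0 X0P)) //=; apply/existsP; exists y; rewrite yX /=.
  by apply/existsP; exists z; rewrite zX leqnn /=; exact: ltnW (ltn_trans yx' xz').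
rewrite inE negb_and; apply/orP; right; apply/negP => /existsP[y' /andP[y'Y /existsP[z' /andP[z'Y /andP[y'y _]]]]].
by have /andP[yy' _] := inY y' y'Y; have := leq_ltn_trans y'y yy'; rewrite ltnn.
Qed.

Lemma nc_sub P P' : P' \subset P -> noncrossing P -> noncrossing P'.
Proof.
move=> sub /forall_inP H; apply/forall_inP => X XP'; apply/forall_inP => Y YP'.
by move: (H X (subsetP sub _ XP')) => /forall_inP /(_ Y (subsetP sub _ YP')).
Qed.

Lemma good_U S V P1 P2 : good V P1 -> good (S :\: V) P2 -> V \subset S ->
  good S (P1 :|: P2).
Proof.
move=> [s1 n1 d1 c1] [s2 n2 d2 c2] VS; split.
- move=> X; rewrite inE => /orP[XP|XP].
    exact: subset_trans (s1 X XP) VS.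
  exact: subset_trans (s2 X XP) (subsetDl S V).
- by move=> X; rewrite inE => /orP[XP|XP]; [apply: n1|apply: n2].
- move=> X Y x; rewrite !inE => /orP[XP|XP] /orP[YP|YP] xX xY.
  + exact: d1 xX xY.
  + have := subsetP (s1 X XP) x xX; have := subsetP (s2 Y YP) x xY.
    by rewrite inE => /andP[/negbTE->].
  + have := subsetP (s1 Y YP) x xY; have := subsetP (s2 X XP) x xX.
    by rewrite inE => /andP[/negbTE->].
  + exact: d2 xX xY.
- move=> x xS; case: (boolP (x \in V)) => xV.
    by have [X XP xX] := c1 x xV; exists X; rewrite // inE XP.
  have : x \in S :\: V by rewrite inE xV.
  by move/c2 => [X XP xX]; exists X; rewrite // inE XP orbT.
Qed.

Lemma interval_trans S V W : is_interval S V -> W \subset V -> is_interval V W ->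
  is_interval S W.
Proof.
move=> /intervalP VI WV /intervalP WI; apply/intervalP => x y z xS yW zW yx xz.
apply: (WI x y z) => //; apply: (VI x y z) => //; exact: (subsetP WV).
Qed.

Lemma next_lift S V W t : isnext V W t -> V \subset S -> is_interval S V ->
  (exists w, w \in W) -> W \subset V -> isnext S W t.
Proof.
move=> [tV tW tmin] VS /intervalP VI [w wW] WV; split.
- exact: (subsetP VS).
- exact: tW.
- move=> x xS Hx; case: (boolP (x \in V)) => xV; first exact: tmin.
  rewrite leqNgt; apply/negP => xt.
  have := VI x w t xS (subsetP WV _ wW) tV (ltnW (Hx w wW)) (ltnW xt).
  by rewrite (negbTE xV).
Qed.

Lemma interval_DD S V W : is_interval S V -> is_interval (S :\: W) (V :\: W).
Proof.
move=> /intervalP VI; apply/intervalP => x y z; rewrite !inE.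
move=> /andP[xW xS] /andP[_ yV] /andP[_ zV] yx xz; rewrite xW /=.
exact: (VI x y z).
Qed.

Lemma setD_DD (S V W : {set 'I_n}) : W \subset V -> (S :\: W) :\: (V :\: W) = S :\: V.
Proof.
move=> WV; apply/setP => x; rewrite !inE.
by case: (boolP (x \in W)) => xW /=; rewrite ?(subsetP WV x xW).
Qed.

Lemma next_DD S V W t j : isnext S V j -> isnext V W t -> W \subset V ->
  isnext (S :\: W) (V :\: W) j.
Proof.
move=> [jS jV jmin] [tV tW tmin] WV; split.
- rewrite inE jS andbT; apply/negP => jW.
  by have := jV j (subsetP WV _ jW); rewrite ltnn.
- by move=> w; rewrite inE => /andP[_ /jV].
- move=> x; rewrite inE => /andP[xW xS] Hx.
  case: (boolP [forall v in V, (v < x)%N]) => [/forall_inP H|]; first exact: jmin.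
  move/forall_inPn => [v vV]; rewrite -leqNgt => xv.
  have tVW : t \in V :\: W by rewrite inE tV andbT; apply/negP => /tW; rewrite ltnn.
  have tx := Hx t tVW.
  case: (boolP (v \in W)) => vW.
    by have := leq_ltn_trans xv (tW v vW); rewrite ltnNge (ltnW tx).
  have : v \in V :\: W by rewrite inE vW.
  by move/Hx; rewrite ltnNge xv.
Qed.

Definition final S W := forall x, x \in S -> ~ (forall w, w \in W -> (w < x)%N).

Lemma prev_DD S V W t p : isprev S V p -> isnext V W t -> W \subset V ->
  is_interval S V -> isprev (S :\: W) (V :\: W) p.
Proof.
move=> [pS pV pmax] [tV tW tmin] WV /intervalP VI; split.
- rewrite inE pS andbT; apply/negP => pW.
  by have := pV p (subsetP WV _ pW); rewrite ltnn.
- by move=> w; rewrite inE => /andP[_ /pV].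
- move=> x; rewrite inE => /andP[xW xS] Hx.
  case: (boolP [forall v in V, (x < v)%N]) => [/forall_inP H|]; first exact: pmax.
  move/forall_inPn => [v vV]; rewrite -leqNgt => vx.
  have tVW : t \in V :\: W by rewrite inE tV andbT; apply/negP => /tW; rewrite ltnn.
  have xt := Hx t tVW.
  have xV := VI x v t xS vV tV vx (ltnW xt).
  have : x \in V :\: W by rewrite inE xW.
  by move/Hx; rewrite ltnn.
Qed.

Lemma final_DD S V W t : final S V -> isnext V W t -> W \subset V ->
  final (S :\: W) (V :\: W).
Proof.
move=> fin [tV tW tmin] WV x; rewrite inE => /andP[xW xS] Hx; apply: (fin x xS) => v vV.
have tVW : t \in V :\: W by rewrite inE tV andbT; apply/negP => /tW; rewrite ltnn.
case: (boolP (v \in W)) => vW; last by apply: Hx; rewrite inE vW.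
exact: ltn_trans (tW v vW) (Hx t tVW).
Qed.

Lemma final_D S W X : final S W -> final (S :\: X) W.
Proof. by move=> fin x; rewrite inE => /andP[_ /fin]. Qed.

Lemma fin_p_notin S W W0 p t0 : W \subset S -> is_interval S W -> is_interval S W0 ->
  [disjoint W & W0] -> (exists w, w \in W) -> isprev S W p -> isnext S W0 t0 ->
  t0 \notin W -> p \notin W0.
Proof.
move=> WS /intervalP WI /intervalP W0I dis [w wW] [pS pW pmax] [t0S t0W0 t0min] t0W.
apply/negP => pW0.
have pw := pW w wW.
have wS := subsetP WS w wW.
have Hw : forall y, y \in W0 -> (y < w)%N.
  move=> y yW0; rewrite ltnNge; apply/negP => wy.
  have := W0I w p y wS pW0 yW0 (ltnW pw) wy.
  by rewrite (disjointFr dis wW).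
have t0w := t0min w wS Hw.
have pt0 := t0W0 p pW0.
case: (boolP [forall w' in W, (t0 < w')%N]) => [/forall_inP H|].
  by have := pmax t0 t0S H; rewrite leqNgt pt0.
move/forall_inPn => [w' w'W]; rewrite -leqNgt => w't0.
by have := WI t0 w' w t0S w'W wW w't0 t0w; rewrite (negbTE t0W).
Qed.

Lemma prev_shift S W W0 p' t0 : isprev S W0 p' -> isnext S W0 t0 -> t0 \in W ->
  (forall w, w \in W -> (t0 <= w)%N) -> is_interval S W0 -> (exists w0, w0 \in W0) ->
  isprev (S :\: W0) W p'.
Proof.
move=> [pS pW0 pmax] [t0S t0W0 t0min] t0W t0m /intervalP W0I [w0 w0W0]; split.
- rewrite inE pS andbT; apply/negP => /pW0; rewrite ltnn //.
- move=> w wW; exact: ltn_trans (pW0 w0 w0W0) (leq_trans (t0W0 w0 w0W0) (t0m w wW)).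
- move=> x; rewrite inE => /andP[xW0 xS] Hx; apply: pmax => // y yW0.
  rewrite ltnNge; apply/negP => yx.
  have xt0 := Hx t0 t0W.
  case: (boolP [forall y' in W0, (y' < x)%N]) => [/forall_inP H|].
    by have := t0min x xS H; rewrite leqNgt xt0.
  move/forall_inPn => [y' y'W0]; rewrite -leqNgt => xy'.
  by have := W0I x y y' xS yW0 y'W0 yx xy'; rewrite (negbTE xW0).
Qed.

Lemma p_in_W0 S W W0 p t0 : isprev S W p -> isnext S W0 t0 -> t0 \in W ->
  (forall w, w \in W -> (t0 <= w)%N) -> (exists w0, w0 \in W0) -> W0 \subset S ->
  p \in W0 /\ forall w, w \in W0 -> (w <= p)%N.
Proof.
move=> [pS pW pmax] [t0S t0W0 t0min] t0W t0m [w0 w0W0] W0S.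
have H : forall w, w \in W0 -> (w <= p)%N.
  move=> w wW0; apply: pmax; first exact: (subsetP W0S).
  by move=> w' w'W; exact: leq_trans (t0W0 w wW0) (t0m w' w'W).
split => //; apply/negPn/negP => pW0.
have : (t0 <= p)%N.
  apply: t0min => // w wW0; rewrite ltn_neqAle H // andbT.
  by apply: contraNneq pW0 => /val_inj <-.
by rewrite leqNgt (pW t0 t0W).
Qed.

Lemma fin_shift S W W0 t0 : final S W -> isnext S W0 t0 -> t0 \in W ->
  is_interval S W -> final (S :\: W) W0.
Proof.
move=> fin [t0S t0W0 t0min] t0W /intervalP WI x; rewrite inE => /andP[xW xS] Hx.
have t0x := t0min x xS Hx.
apply: (fin x xS) => w wW; rewrite ltnNge; apply/negP => xw.
by have := WI x t0 w xS t0W wW t0x xw; rewrite (negbTE xW).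
Qed.

Lemma cover2 S W W0 t0 : final S W -> isnext S W0 t0 -> t0 \in W ->
  is_interval S W -> is_interval S W0 ->
  (forall x, x \in S -> ~ (forall w0, w0 \in W0 -> (x < w0)%N)) ->
  forall x, x \in S -> (x \in W0) || (x \in W).
Proof.
move=> fin [t0S t0W0 t0min] t0W /intervalP WI /intervalP W0I nop x xS.
case: (boolP (x \in W0)) => //= xW0; apply/negPn/negP => xW.
have [w0 w0W0 w0x] : exists2 w0, w0 \in W0 & (w0 <= x)%N.
  case: (boolP [forall w0 in W0, (x < w0)%N]) => [/forall_inP H|]; first by case: (nop x xS).
  by move/forall_inPn => [w0 w0W0]; rewrite -leqNgt => ?; exists w0.
have [w wW xw] : exists2 w, w \in W & (x <= w)%N.
  case: (boolP [forall w in W, (w < x)%N]) => [/forall_inP H|]; first by case: (fin x xS).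
  by move/forall_inPn => [w wW]; rewrite -leqNgt => ?; exists w.
have t0x : (t0 <= x)%N.
  apply: t0min => // y yW0; rewrite ltnNge; apply/negP => xy.
  by have := W0I x w0 y xS w0W0 yW0 w0x xy; rewrite (negbTE xW0).
by have := WI x t0 w xS t0W wW t0x xw; rewrite (negbTE xW).
Qed.

End Geom2.

End MP5.
Import MP5.

Module MP4.
Import Order.TTheory GRing.Theory Num.Theory.
Set Implicit Arguments. Unset Strict Implicit. Unset Printing Implicit Defensive.
Local Open Scope ring_scope.

Section PhiTheory.
Variables (R : realType) (Bt A : algType R[i]).
Variable iota : {lrmorphism Bt -> A}.
Variable E : {linear A -> Bt}.
Hypothesis E_bimod : forall (b1 b2 : Bt) (x : A), E (iota b1 * x * iota b2) = b1 * E x * b2.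
Variable n : nat.
Implicit Types (S W V X Y : {set 'I_n}) (P Q : {set {set 'I_n}}) (a b : 'I_n -> A).

Local Notation PH := (Phi iota E).
Definition PS W a := \prod_(i <- enum W) a i.
Definition step a W (j : 'I_n) := fun i => if i == j then iota (E (PS W a)) * a i else a i.
Definition pk S P := [pick W in P | is_interval S W && (next_after S W != None)].

Lemma E_l c x : E (iota c * x) = c * E x.
Proof. by have := E_bimod c 1 x; rewrite rmorph1 !mulr1. Qed.
Lemma E_r c x : E (x * iota c) = E x * c.
Proof. by have := E_bimod 1 c x; rewrite rmorph1 !mul1r. Qed.

Lemma Phi_none S P a : pk S P = None -> PH S P a = E (PS S a).
Proof. by rewrite /Phi /pk; case: #|P| => [|k] //= ->. Qed.

Lemma pk_some S P W : pk S P = Some W ->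
  [/\ W \in P, is_interval S W & exists j, next_after S W = Some j].
Proof.
rewrite /pk; case: pickP => // W' /andP[WP /andP[WI Wn]] [<-]; split => //.
by case: (next_after S W') Wn => // j _; exists j.
Qed.

Lemma pk_none S P W : pk S P = None -> W \in P -> is_interval S W -> next_after S W = None.
Proof.
rewrite /pk; case: pickP => // H _ WP WI; have := H W; rewrite WP WI /=.
by case: (next_after S W).
Qed.

Lemma Phi_step S P a W j : pk S P = Some W -> next_after S W = Some j ->
  PH S P a = PH (S :\: W) (P :\ W) (step a W j).
Proof.
move=> Hp Hn; have [WP _ _] := pk_some Hp.
move: Hp; rewrite {1}/Phi (cardsD1 W P) WP add1n /= /pk => -> ; rewrite Hn //.
Qed.

Lemma PS_ext W a b : {in W, a =1 b} -> PS W a = PS W b.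
Proof. by move=> H; apply: eq_big_seq => i; rewrite mem_enum; apply: H. Qed.

Lemma card_lt P W k : (#|P| < k.+1)%N -> W \in P -> (#|P :\ W| < k)%N.
Proof. by move=> H WP; move: H; rewrite (cardsD1 W P) WP. Qed.

Lemma Phi_ext S P a b : good S P -> {in S, a =1 b} -> PH S P a = PH S P b.
Proof.
have [k Hk] := ubnP #|P|; elim: k S P a b Hk => // k IH S P a b Hk gP Hab.
case Hp: (pk S P) => [W|]; last by rewrite !Phi_none // (@PS_ext S a b).
have [WP WI [j Hj]] := pk_some Hp.
rewrite !(Phi_step _ Hp Hj); apply: IH; first exact: card_lt Hk WP.
  exact: good_D.
move=> i; rewrite inE => /andP[iW iS]; rewrite /step Hab //.
rewrite (PS_ext (b := b)) // => x xW; apply: Hab; exact: (subsetP (good_sub gP WP)).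
Qed.

Lemma step_out W a j : {in ~: [set j], step a W j =1 a}.
Proof. by move=> i; rewrite !inE /step => /negbTE ->. Qed.

Lemma PS_upd_out W a j x : j \notin W -> PS W (upd a j x) = PS W a.
Proof. by move=> jW; rewrite /PS prod_out // mem_enum. Qed.

Lemma PS_step_out W W' a j : j \notin W -> PS W (step a W' j) = PS W a.
Proof. by move=> jW; apply: PS_ext => i iW; rewrite /step; case: eqP => // e; rewrite -e iW in jW. Qed.

Lemma PS_step_min W W' a t : t \in W -> (forall x, x \in W -> (t <= x)%N) ->
  PS W (step a W' t) = iota (E (PS W' a)) * PS W a.
Proof.
move=> tW tmin; rewrite /PS -(@prod_min _ _ (enum W) a t (iota (E (PS W' a)))).
- by apply: eq_big_seq => i _; rewrite /step /upd; case: eqP => // ->.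
- exact: enum_sorted.
- by rewrite mem_enum.
- by move=> w; rewrite mem_enum; apply: tmin.
Qed.

Lemma setDC3 (T : finType) (S B C : {set T}) : S :\: B :\: C = S :\: C :\: B.
Proof. by rewrite !setDDl setUC. Qed.

Lemma R_step S P a W t : good S P -> W \in P -> is_interval S W -> isnext S W t ->
  PH S P a = PH (S :\: W) (P :\ W) (step a W t).
Proof.
have [k Hk] := ubnP #|P|; elim: k S P a W t Hk => // k IH S P a W t Hk gP WP WI Wt.
case Hp: (pk S P) => [W0|]; last first.
  by have := pk_none Hp WP WI; rewrite (next_afterP Wt).
have [W0P W0I [t0 Ht0]] := pk_some Hp; rewrite (Phi_step _ Hp Ht0).
have W0t0 := next_afterE Ht0.
have [e|neq] := eqVneq W0 W; first by subst W0; rewrite (isnext_uniq W0t0 Wt).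
(* symmetric diamond *)
have gen : forall W1 W2 t1 t2, W1 \in P -> W2 \in P -> W1 != W2 ->
    is_interval S W1 -> is_interval S W2 -> isnext S W1 t1 -> isnext S W2 t2 ->
    t2 \notin W1 ->
    PH (S :\: W2) (P :\ W2) (step a W2 t2) = PH (S :\: W1) (P :\ W1) (step a W1 t1).
  move=> W1 W2 t1 t2 W1P W2P n12 W1I W2I W1t W2t t2W1.
  have dis : [disjoint W1 & W2] by exact: good_disj gP W1P W2P n12.
  have W1S := good_sub gP W1P; have W2S := good_sub gP W2P.
  have W2t' : isnext (S :\: W1) W2 t2 by exact: isnext_D.
  have W2I' : is_interval (S :\: W1) W2 by apply: interval_sub W2I _; exact: subsetDl.
  have W1I' : is_interval (S :\: W2) W1 by apply: interval_sub W1I _; exact: subsetDl.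
  have g1 := good_D gP W1P; have g2 := good_D gP W2P.
  have W2P1 : W2 \in P :\ W1 by rewrite !inE W2P andbT eq_sym.
  have W1P2 : W1 \in P :\ W2 by rewrite !inE W1P andbT.
  rewrite [RHS](IH _ _ _ W2 t2) //; last exact: card_lt Hk W1P.
  have [t1W2|t1W2] := boolP (t1 \in W2).
  - have W1t' := next_shift W1t t1W2 W2t W2I.
    rewrite (IH _ _ _ W1 t2) //; last exact: card_lt Hk W2P.
    rewrite setDC3 [X in PH _ X](setDC3 P).
    apply: Phi_ext; first by apply: good_D => //; exact: good_D.
    move=> i; rewrite !inE => /and3P[iW2 iW1 iS].
    have i1 : i != t1 by apply: contraNneq iW2 => ->.
    rewrite /step (negbTE i1) /=; case: eqP => // it2.
    rewrite PS_step_out // (PS_step_min W1 a t1W2).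
      by rewrite E_l rmorphM mulrA.
    exact: (next_min W1t W1S W2S W2I t1W2 dis).
  - have W1t' : isnext (S :\: W2) W1 t1 by exact: isnext_D.
    rewrite (IH _ _ _ W1 t1) //; last exact: card_lt Hk W2P.
    rewrite setDC3 [X in PH _ X](setDC3 P).
    apply: Phi_ext; first by apply: good_D => //; exact: good_D.
    move=> i; rewrite !inE => /and3P[iW2 iW1 iS].
    have nt : t1 != t2.
      apply: (next_neq W1S W2S W1I W2I dis _ _ W1t W2t).
        exact: good_ne gP W1P.
      exact: good_ne gP W2P.
    rewrite /step !PS_step_out //.
    case: (i =P t1) => [e1|_]; case: (i =P t2) => // e2.
    by move: nt; rewrite -e1 -e2 eqxx.
have [t0W|t0W] := boolP (t0 \in W).
  symmetry; apply: gen => //.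
  apply/negP => tW0; have [_ H1 _] := W0t0; have [_ H2 _] := Wt.
  by have := ltn_trans (H1 t tW0) (H2 t0 t0W); rewrite ltnn.
by apply: gen => //; rewrite eq_sym.
Qed.

Lemma PS_max W a p y : p \in W -> (forall w, w \in W -> (w <= p)%N) ->
  PS W (upd a p (a p * y)) = PS W a * y.
Proof.
move=> pW pmax; rewrite /PS prod_max //; first exact: enum_sorted.
  by rewrite mem_enum.
by move=> w; rewrite mem_enum; apply: pmax.
Qed.

Lemma PS_min W a t y : t \in W -> (forall w, w \in W -> (t <= w)%N) ->
  PS W (upd a t (y * a t)) = y * PS W a.
Proof.
move=> tW tmin; rewrite /PS prod_min //; first exact: enum_sorted.
  by rewrite mem_enum.
by move=> w; rewrite mem_enum; apply: tmin.
Qed.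

Lemma PS_adj W a p j y : consec W p j ->
  PS W (upd a p (a p * y)) = PS W (upd a j (y * a j)).
Proof.
case=> pW jW pj Hc; rewrite /PS (@prod_adj _ _ _ a p j) //; first exact: enum_sorted.
- by rewrite mem_enum.
- by rewrite mem_enum.
- by move=> x; rewrite mem_enum; apply: Hc.
Qed.

Ltac pt := rewrite /upd /step;
  repeat (match goal with |- context [?x == ?y] =>
            let e := fresh "e" in case: (x =P y) => e end);
  try subst; try (by exfalso; congruence);
  rewrite ?E_l ?E_r ?rmorphM ?mulrA //.

Lemma Adj S P a p j c : good S P -> consec S p j ->
  PH S P (upd a p (a p * iota c)) = PH S P (upd a j (iota c * a j)).
Proof.
have [k Hk] := ubnP #|P|; elim: k S P a p j Hk => // k IH S P a p j Hk gP C.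
move: (C) => [pS jS pj Hc].
have pnj : p <> j by move=> e; rewrite e ltnn in pj.
case Hp: (pk S P) => [W|]; last by rewrite !Phi_none // (PS_adj _ _ C).
have [WP WI [t Ht]] := pk_some Hp; rewrite !(Phi_step _ Hp Ht).
have Wt := next_afterE Ht; have WS := good_sub gP WP; have Wne := good_ne gP WP.
have gW := good_D gP WP; have HkW := card_lt Hk WP.
case: (boolP (p \in W)) => pW; case: (boolP (j \in W)) => jW.
- apply: Phi_ext => // i; rewrite inE => /andP[iW iS].
  have ip : i <> p by move=> e; rewrite e pW in iW.
  have ij : i <> j by move=> e; rewrite e jW in iW.
  rewrite /step (PS_adj _ _ (consec_sub C WS pW jW)).
  by pt.
- have tj : t = j := isnext_uniq Wt (adj_next C WI pW jW); subst t.
  apply: Phi_ext => // i; rewrite inE => /andP[iW iS].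
  have ip : i <> p by move=> e; rewrite e pW in iW.
  rewrite /step (PS_upd_out _ _ jW) PS_max //; last exact: adj_pmax C WS WI pW jW.
  by pt.
- have jmin := adj_jmin C WS WI jW pW.
  have C' := adj_consec C WS WI jW pW Wt.
  have tp : t <> p by move=> e; move: C' => [_ _ + _]; rewrite e ltnn.
  have tj : t <> j by move=> e; have [_ H _] := Wt; have := H j jW; rewrite e ltnn.
  transitivity (PH (S :\: W) (P :\ W) (upd (step a W t) p (step a W t p * iota c))).
    apply: Phi_ext => // i; rewrite inE => /andP[iW iS].
    have ij : i <> j by move=> e; rewrite e jW in iW.
    rewrite /step PS_upd_out //.
    by pt.
  transitivity (PH (S :\: W) (P :\ W) (upd (step a W t) t (iota c * step a W t t))).
    exact: IH.
  apply: Phi_ext => // i; rewrite inE => /andP[iW iS].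
  have ij : i <> j by move=> e; rewrite e jW in iW.
  rewrite /step PS_min //.
  by pt.
- have tj : t <> j by move/eqP: (adj_t_ne_j C WS Wne Wt pW).
  have pS' : p \in S :\: W by rewrite inE pW.
  have jS' : j \in S :\: W by rewrite inE jW.
  have C' := consec_sub C (subsetDl S W) pS' jS'.
  transitivity (PH (S :\: W) (P :\ W) (upd (step a W t) p (step a W t p * iota c))).
    apply: Phi_ext => // i; rewrite inE => /andP[iW iS].
    rewrite /step PS_upd_out //.
    by pt.
  transitivity (PH (S :\: W) (P :\ W) (upd (step a W t) j (iota c * step a W t j))).
    exact: IH.
  apply: Phi_ext => // i; rewrite inE => /andP[iW iS].
  rewrite /step PS_upd_out //.
  by pt.
Qed.

Lemma Phi_single S a : (exists x, x \in S) -> PH S [set S] a = E (PS S a).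
Proof.
move=> [x xS]; apply: Phi_none; rewrite /pk; case: pickP => // W.
rewrite inE => /andP[/eqP -> /andP[_]].
case e: (next_after S S) => [j|//] _.
by have [jS jW _] := next_afterE e; have := jW j jS; rewrite ltnn.
Qed.

Lemma good_single S : (exists x, x \in S) -> good S [set S].
Proof.
move=> [x xS]; split.
- by move=> X; rewrite inE => /eqP ->.
- by move=> X; rewrite inE => /eqP ->; exists x.
- by move=> X Y y; rewrite !inE => /eqP -> /eqP ->.
- by move=> y yS; exists S; rewrite ?inE.
Qed.

Lemma good_one V P : good V P -> (#|P| <= 1)%N -> (exists x, x \in V) -> P = [set V].
Proof.
move=> [sub ne dis cov] cP [x xV]; have [X XP xX] := cov x xV.
have PX : P = [set X].
  by apply/esym/eqP; rewrite eqEcard sub1set XP cards1 cP.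
rewrite PX; congr [set _]; apply/eqP; rewrite eqEsubset (sub X XP) /=.
apply/subsetP => y yV; have [Y YP yY] := cov y yV.
by move: YP; rewrite PX inE => /eqP <-.
Qed.

Lemma setD1U1 P1 P2 W : W \notin P2 -> (P1 :|: P2) :\ W = (P1 :\ W) :|: P2.
Proof.
move=> WP2; apply/setP => X; rewrite !inE.
case: (X =P W) => [->|_] /=; first by rewrite (negbTE WP2).
by [].
Qed.

Lemma notin_P2 S V P2 W : good (S :\: V) P2 -> W \subset V -> (exists w, w \in W) ->
  W \notin P2.
Proof.
move=> g2 WV [w wW]; apply/negP => WP2.
have := subsetP (good_sub g2 WP2) w wW; rewrite inE (subsetP WV w wW).
done.
Qed.

Lemma F_fact S V P1 P2 a j : good V P1 -> noncrossing P1 -> good (S :\: V) P2 ->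
  V \subset S -> (exists v, v \in V) -> is_interval S V -> isnext S V j ->
  PH S (P1 :|: P2) a = PH (S :\: V) P2 (upd a j (iota (PH V P1 a) * a j)).
Proof.
have [k Hk] := ubnP #|P1|.
elim: k S V P1 a Hk => // k IH S V P1 a Hk g1 nc1 g2 VS Vne VI Vj.
have gU := good_U g1 g2 VS.
have jV : j \notin V by case: Vj => _ H _; apply/negP => /H; rewrite ltnn.
case: (leqP #|P1| 1) => cP1.
  have P1V := good_one g1 cP1 Vne; rewrite P1V in gU *.
  have VP : V \in [set V] :|: P2 by rewrite !inE eqxx.
  rewrite Phi_single // (R_step _ gU VP VI Vj) setD1U1; last exact: notin_P2 g2 (subxx V) Vne.
  rewrite setDv set0U; apply: Phi_ext => // i _.
  by rewrite /step /upd; case: eqP => // ->.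
have [W WP1 [WI [t Wt]]] := ex_elig g1 nc1 cP1.
have WV := good_sub g1 WP1; have Wne := good_ne g1 WP1.
have WSI := interval_trans VI WV WI; have WSt := next_lift Wt VS VI Wne WV.
have WP : W \in P1 :|: P2 by rewrite inE WP1.
have WP2 := notin_P2 g2 WV Wne.
have [tV tW _] := Wt.
have tnW : t \notin W by apply/negP => /tW; rewrite ltnn.
have jt : j != t by apply: contraNneq jV => ->.
rewrite (R_step _ gU WP WSI WSt) setD1U1 // (R_step a g1 WP1 WI Wt).
rewrite (IH (S :\: W) (V :\: W) (P1 :\ W)).
- rewrite setD_DD //; apply: Phi_ext => // i; rewrite inE => /andP[iV iS].
  have it : i != t by apply: contraNneq iV => ->.
  rewrite /upd; case: eqP => [e|_]; rewrite /step ?(negbTE it) //.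
  by rewrite (negbTE jt) ?e.
- exact: card_lt Hk WP1.
- exact: good_D.
- by apply: nc_sub nc1; exact: subD1set.
- by rewrite setD_DD.
- exact: setSD.
- by exists t; rewrite inE tnW.
- exact: interval_DD.
- exact: next_DD Vj Wt WV.
Qed.

Lemma Phi_add S P a j x y : good S P -> j \in S ->
  PH S P (upd a j (x + y)) = PH S P (upd a j x) + PH S P (upd a j y).
Proof.
have [k Hk] := ubnP #|P|; elim: k S P a j x y Hk => // k IH S P a j x y Hk gP jS.
case Hp: (pk S P) => [W|].
  have [WP WI [t Ht]] := pk_some Hp; rewrite !(Phi_step _ Hp Ht).
  have Wt := next_afterE Ht; have [tS tW _] := Wt.
  have tnW : t \notin W by apply/negP => /tW; rewrite ltnn.
  have gW := good_D gP WP; have HkW := card_lt Hk WP.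
  case: (boolP (j \in W)) => jW.
    have jt : j != t by apply: contraNneq tnW => <-.
    pose f v := iota (E (PS W (upd a j v))) * a t.
    have eq v : PH (S :\: W) (P :\ W) (step (upd a j v) W t) = PH (S :\: W) (P :\ W) (upd a t (f v)).
      apply: Phi_ext => // i; rewrite inE => /andP[iW iS].
      have ij : i != j by apply: contraNneq iW => ->.
      rewrite /step /upd (negbTE ij); case: eqP => // ->.
      by [].
    rewrite !eq -IH //; last by rewrite inE tnW.
    congr PH; congr upd; rewrite /f /PS prod_lin ?enum_uniq ?mem_enum //.
    by rewrite !raddfD /= mulrDl.
  have PSu v : PS W (upd a j v) = PS W a by rewrite PS_upd_out.
  have jS' : j \in S :\: W by rewrite inE jW.
  case: (j =P t) => [jt|jt].
    subst t.
    have eq v : PH (S :\: W) (P :\ W) (step (upd a j v) W j) =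
                PH (S :\: W) (P :\ W) (upd (step a W j) j (iota (E (PS W a)) * v)).
      apply: Phi_ext => // i _; rewrite /step PSu /upd; by case: eqP.
    by rewrite !eq -IH // mulrDr.
  have eq v : PH (S :\: W) (P :\ W) (step (upd a j v) W t) =
              PH (S :\: W) (P :\ W) (upd (step a W t) j v).
    apply: Phi_ext => // i _; rewrite /step PSu /upd.
    have tj : (t == j) = false by apply/eqP => e; apply: jt; rewrite e.
    case: (i =P t) => [->|_]; first by rewrite tj.
    by case: (i =P j).
  by rewrite !eq -IH.
rewrite !Phi_none // /PS prod_lin ?enum_uniq ?mem_enum //.
by rewrite raddfD.
Qed.

Lemma two_blocks S P W W0 : good S P -> W \in P -> W0 \in P -> W != W0 ->
  (forall x, x \in S -> (x \in W0) || (x \in W)) ->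
  S :\: W0 = W /\ P :\ W0 = [set W].
Proof.
move=> gP WP W0P nW cov; have dis := good_disj gP WP W0P nW.
have WS := good_sub gP WP.
have e1 : S :\: W0 = W.
  apply/setP => x; rewrite inE; case: (boolP (x \in W)) => xW.
    by rewrite (disjointFr dis xW) (subsetP WS x xW).
  by case: (boolP (x \in S)) => xS; rewrite ?andbF //; move: (cov x xS); rewrite (negbTE xW) orbF => ->.
split => //; apply/setP => X; rewrite !inE.
case: (X =P W) => [->|XW] /=; first by rewrite WP nW.
apply/negbTE; rewrite negb_and negbK; apply/orP; case: (boolP (X \in P)) => XP; [left|by right].
have [x xX] := good_ne gP XP; have xS := subsetP (good_sub gP XP) x xX.
case: gP => _ _ dis' _.
move: (cov x xS) => /orP[xW0|xW]; first by apply/eqP; exact: dis' xX xW0.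
by case: XW; exact: dis' xX xW.
Qed.

Lemma Rfin S P a W p : good S P -> noncrossing P -> W \in P -> is_interval S W ->
  isprev S W p -> final S W ->
  PH S P a = PH (S :\: W) (P :\ W) (upd a p (a p * iota (E (PS W a)))).
Proof.
have [k Hk] := ubnP #|P|; elim: k S P a W p Hk => // k IH S P a W p Hk gP nc WP WI Wp fin.
move: (Wp) => [pS pW pmax].
have pnW : p \notin W by apply/negP => /pW; rewrite ltnn.
have cP : (1 < #|P|)%N.
  have [X XP pX] : exists2 X, X \in P & p \in X by case: gP => _ _ _ cov; apply: cov.
  rewrite (cardsD1 W P) WP add1n ltnS card_gt0; apply/set0Pn; exists X.
  by rewrite !inE XP andbT; apply: contraNneq pnW => <-.
case Hp: (pk S P) => [W0|]; last first.
  have [W1 W1P [W1I [t1 W1t]]] := ex_elig gP nc cP.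
  by have := pk_none Hp W1P W1I; rewrite (next_afterP W1t).
have [W0P W0I [t0 Ht0]] := pk_some Hp; rewrite (Phi_step _ Hp Ht0).
have W0t0 := next_afterE Ht0.
have nW : W != W0.
  by apply/eqP => e; subst W0; case: W0t0 => t0S H _; apply: (fin t0 t0S H).
have dis := good_disj gP WP W0P nW.
have dis' : [disjoint W0 & W] by rewrite disjoint_sym.
have WS := good_sub gP WP; have W0S := good_sub gP W0P.
have Wne := good_ne gP WP; have W0ne := good_ne gP W0P.
have g0 := good_D gP W0P; have gW := good_D gP WP.
have WP0 : W \in P :\ W0 by rewrite !inE WP andbT.
have W0PW : W0 \in P :\ W by rewrite !inE W0P andbT eq_sym.
have nc0 : noncrossing (P :\ W0) by apply: nc_sub nc; exact: subD1set.
have ncW : noncrossing (P :\ W) by apply: nc_sub nc; exact: subD1set.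
have Hk0 := card_lt Hk W0P; have HkW := card_lt Hk WP.
have [t0S t0W0 _] := W0t0.
have t0nW0 : t0 \notin W0 by apply/negP => /t0W0; rewrite ltnn.
case: (boolP (t0 \in W)) => t0W; last first.
  have pW0 := fin_p_notin WS WI W0I dis Wne Wp W0t0 t0W.
  rewrite (IH (S :\: W0) (P :\ W0) _ W p) //; last first.
  - exact: final_D.
  - exact: isprev_D.
  - by apply: interval_sub WI _; exact: subsetDl.
  rewrite (R_step _ gW W0PW (interval_sub W0I (subsetDl S W)) (isnext_D W0t0 t0W)).
  rewrite setDC3 [X in PH _ X](setDC3 P).
  apply: Phi_ext; first by apply: good_D => //; exact: good_D.
  move=> i; rewrite !inE => /and3P[iW iW0 iS].
  rewrite (PS_step_out _ _ t0W) /step (PS_upd_out _ _ pW0).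
  by pt.
have t0m := next_min W0t0 W0S WS WI t0W dis'.
have [pW0 pmx] := p_in_W0 Wp W0t0 t0W t0m W0ne W0S.
have fin0 := fin_shift fin W0t0 t0W WI.
case: (boolP [exists x in S, [forall w0 in W0, (x < w0)%N]]) => [/exists_inP [x xS /forall_inP Hx]|nop].
  have [p' W0p'] := ex_prev xS Hx.
  have [p'S p'W0 _] := W0p'.
  have p'nW0 : p' \notin W0 by apply/negP => /p'W0; rewrite ltnn.
  have p'nW : p' \notin W.
    apply/negP => p'W; have [w0 w0W0] := W0ne.
    by have := ltn_trans (p'W0 w0 w0W0) (leq_trans (t0W0 w0 w0W0) (t0m p' p'W)); rewrite ltnn.
  rewrite (IH (S :\: W0) (P :\ W0) _ W p') //; last first.
  - exact: final_D.
  - exact: prev_shift W0p' W0t0 t0W t0m W0I W0ne.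
  - by apply: interval_sub WI _; exact: subsetDl.
  rewrite (IH (S :\: W) (P :\ W) _ W0 p') //; last first.
  - exact: isprev_D.
  - by apply: interval_sub W0I _; exact: subsetDl.
  rewrite setDC3 [X in PH _ X](setDC3 P).
  apply: Phi_ext; first by apply: good_D => //; exact: good_D.
  move=> i; rewrite !inE => H.
  have iW : i \notin W by case/and3P: H.
  have iW0 : i \notin W0 by case/and3P: H.
  rewrite (PS_step_min _ _ t0W t0m) PS_max //.
  have ip : i <> p by move=> e; rewrite e pW0 in iW0.
  have it : i <> t0 by move=> e; rewrite e t0W in iW.
  have p'p : p' <> p by move=> e; rewrite e pW0 in p'nW0.
  have p't : p' <> t0 by move=> e; rewrite e t0W in p'nW.
  by pt.
have nop' : forall x, x \in S -> ~ (forall w0, w0 \in W0 -> (x < w0)%N).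
  move=> x xS H; move/negP: nop; apply; apply/exists_inP; exists x => //.
  exact/forall_inP.
have cov := cover2 fin W0t0 t0W WI W0I nop'.
have [e1 e2] := two_blocks gP WP W0P nW cov.
have [e3 e4] : S :\: W = W0 /\ P :\ W = [set W0].
  apply: two_blocks => //; first by rewrite eq_sym.
  by move=> x /cov; rewrite orbC.
rewrite e1 e2 e3 e4 !Phi_single // (PS_step_min _ _ t0W t0m) PS_max //.
by rewrite E_l E_r.
Qed.

Lemma Ffin_fact S V P1 P2 a p : good V P1 -> noncrossing P1 -> good (S :\: V) P2 ->
  noncrossing (P1 :|: P2) ->
  V \subset S -> (exists v, v \in V) -> is_interval S V -> isprev S V p -> final S V ->
  PH S (P1 :|: P2) a = PH (S :\: V) P2 (upd a p (a p * iota (PH V P1 a))).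
Proof.
have [k Hk] := ubnP #|P1|.
elim: k S V P1 a Hk => // k IH S V P1 a Hk g1 nc1 g2 ncU VS Vne VI Vp fin.
have gU := good_U g1 g2 VS.
have pV : p \notin V by case: Vp => _ H _; apply/negP => /H; rewrite ltnn.
case: (leqP #|P1| 1) => cP1.
  have P1V := good_one g1 cP1 Vne; rewrite P1V in gU ncU *.
  have VP : V \in [set V] :|: P2 by rewrite !inE eqxx.
  rewrite Phi_single // (Rfin _ gU ncU VP VI Vp fin) setD1U1; last exact: notin_P2 g2 (subxx V) Vne.
  by rewrite setDv set0U.
have [W WP1 [WI [t Wt]]] := ex_elig g1 nc1 cP1.
have WV := good_sub g1 WP1; have Wne := good_ne g1 WP1.
have WSI := interval_trans VI WV WI; have WSt := next_lift Wt VS VI Wne WV.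
have WP : W \in P1 :|: P2 by rewrite inE WP1.
have WP2 := notin_P2 g2 WV Wne.
have [tV tW _] := Wt.
have tnW : t \notin W by apply/negP => /tW; rewrite ltnn.
have pt' : p != t by apply: contraNneq pV => ->.
rewrite (R_step _ gU WP WSI WSt) setD1U1 // (R_step a g1 WP1 WI Wt).
rewrite (IH (S :\: W) (V :\: W) (P1 :\ W)).
- rewrite setD_DD //; apply: Phi_ext => // i; rewrite inE => /andP[iV iS].
  have it : i != t by apply: contraNneq iV => ->.
  rewrite /upd; case: eqP => [e|_]; rewrite /step ?(negbTE it) //.
  by rewrite (negbTE pt') ?e.
- exact: card_lt Hk WP1.
- exact: good_D.
- by apply: nc_sub nc1; exact: subD1set.
- by rewrite setD_DD.
- by apply: nc_sub ncU; rewrite -setD1U1 //; exact: subD1set.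
- exact: setSD.
- by exists t; rewrite inE tnW.
- exact: interval_DD.
- exact: prev_DD Vp Wt WV VI.
- exact: final_DD fin Wt WV.
Qed.

End PhiTheory.

End MP4.
Import MP4.

Module MP7.
Import Order.TTheory GRing.Theory Num.Theory.
Set Implicit Arguments. Unset Strict Implicit. Unset Printing Implicit Defensive.
Local Open Scope ring_scope.

Section Mob.
Variables (T : finType) (dom : pred T) (le : rel T) (r : T -> nat).
Hypothesis Hrk : forall x y, dom x -> dom y -> le x y -> x != y -> (r y < r x)%N.
Hypothesis Hrefl : forall x, dom x -> le x x.
Hypothesis Htrans : forall x y z, le x y -> le y z -> le x z.

Local Notation mf := (mobius_fuel dom le).

Lemma mf_refl k x : mf k x x = 1.
Proof. by case: k => [|k] /=; rewrite eqxx. Qed.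

Lemma mf_stab x m : dom x -> forall y k k', dom y -> (r x - r y <= m)%N ->
  (m <= k)%N -> (m <= k')%N -> mf k x y = mf k' x y.
Proof.
move=> dx; elim: m => [|m IH] y k k' dy hm hk hk'.
  case: (eqVneq x y) => [<-|xy]; first by rewrite !mf_refl.
  case lxy: (le x y).
    by have := Hrk dx dy lxy xy; rewrite -subn_gt0 => /leq_trans /(_ hm).
  by case: k k' {hk hk'} => [|k] [|k'] /=; rewrite (negbTE xy) ?lxy.
case: (eqVneq x y) => [<-|xy]; first by rewrite !mf_refl.
case lxy: (le x y); last by case: k k' {hk hk'} => [|k] [|k'] /=; rewrite (negbTE xy) ?lxy.
case: k k' hk hk' => [|k] [|k'] //= hk hk'; rewrite (negbTE xy) lxy; congr (- _).
apply: eq_bigr => z /and4P[dz lxz lzy zy]; apply: (IH z) => //.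
have ryz := Hrk dz dy lzy zy.
case: (eqVneq x z) => [<-|xz]; first by rewrite subnn.
have rzx := Hrk dx dz lxz xz; lia.
Qed.

Lemma mf_sum x y N : dom x -> dom y -> le x y -> x != y -> (r x <= N)%N ->
  \sum_(z | [&& dom z, le x z & le z y]) mf N x z = 0.
Proof.
move=> dx dy lxy xy hN.
have ryx := Hrk dx dy lxy xy.
case: N hN => [|N] hN; first by lia.
have E1 : mf N.+1 x y = - \sum_(z | [&& dom z, le x z, le z y & z != y]) mf N x z.
  by rewrite /= (negbTE xy) lxy.
rewrite (bigD1 y); last by rewrite dy lxy Hrefl.
rewrite E1 (eq_bigl (fun z => [&& dom z, le x z, le z y & z != y])); last first.
  by move=> z; rewrite !andbA.
have -> : \sum_(z | [&& dom z, le x z, le z y & z != y]) mf N.+1 x z =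
          \sum_(z | [&& dom z, le x z, le z y & z != y]) mf N x z.
  apply: eq_bigr => z /and4P[dz lxz lzy zy]; apply: (mf_stab (m := N)) => //.
  have := Hrk dz dy lzy zy => ryz; lia.
exact: addNr.
Qed.

Lemma mf_unique (f : T -> int) x top N : dom x -> (r x <= N)%N -> f x = 1 ->
  (forall y, dom y -> le x y -> le y top -> x != y ->
     \sum_(z | [&& dom z, le x z & le z y]) f z = 0) ->
  forall y, dom y -> le x y -> le y top -> f y = mf N x y.
Proof.
move=> dx hN fx Hf y.
have [m Hm] := ubnP (r x - r y)%N; elim: m y Hm => // m IH y Hm dy lxy lyt.
case: (eqVneq x y) => [<-|xy]; first by rewrite fx mf_refl.
have ryx := Hrk dx dy lxy xy.
have S1 := Hf y dy lxy lyt xy; have S2 := mf_sum dx dy lxy xy hN.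
rewrite (bigD1 y) in S1; last by rewrite dy lxy Hrefl.
rewrite (bigD1 y) in S2; last by rewrite dy lxy Hrefl.
have eqrest : \sum_(z | [&& dom z, le x z & le z y] && (z != y)) f z =
              \sum_(z | [&& dom z, le x z & le z y] && (z != y)) mf N x z.
  apply: eq_bigr => z /andP[/and3P[dz lxz lzy] zy]; apply: IH => //; last exact: Htrans lzy lyt.
  have ryz := Hrk dz dy lzy zy.
  case: (eqVneq x z) => [<-|xz]; first by rewrite subnn; lia.
  have := Hrk dx dz lxz xz; lia.
apply: (@addIr _ (\sum_(z | [&& dom z, le x z & le z y] && (z != y)) mf N x z)).
rewrite -[X in _ + X = _]eqrest.
exact: (etrans S1 (esym S2)).
Qed.

End Mob.

End MP7.
Import MP7.

Module MP8.
Set Implicit Arguments. Unset Strict Implicit. Unset Printing Implicit Defensive.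

Section Refine.
Variable n : nat.
Implicit Types (S W V X Y : {set 'I_n}) (P Q : {set {set 'I_n}}).

Lemma refinesP P Q : reflect (forall X, X \in P -> exists2 Y, Y \in Q & X \subset Y) (refines P Q).
Proof.
apply: (iffP forall_inP) => H X /H.
- by case/exists_inP => Y YQ XY; exists Y.
- by case=> Y YQ XY; apply/exists_inP; exists Y.
Qed.

Lemma refines_refl P : refines P P.
Proof. by apply/refinesP => X XP; exists X. Qed.

Lemma refines_trans P Q R : refines P Q -> refines Q R -> refines P R.
Proof.
move=> /refinesP H1 /refinesP H2; apply/refinesP => X /H1 [Y /H2 [Z ZR YZ] XY].
by exists Z => //; apply: subset_trans XY YZ.
Qed.

Lemma refines_card S P Q : good S P -> good S Q -> refines P Q -> P != Q ->
  (#|Q| < #|P|)%N.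
Proof.
move=> gP gQ /refinesP ref PQ.
move: (gP) (gQ) => [subP neP disP covP] [subQ neQ disQ covQ].
pose g Y := odflt set0 [pick X in P | X \subset Y].
have gY : forall Y, Y \in Q -> g Y \in P /\ g Y \subset Y.
  move=> Y YQ; rewrite /g; case: pickP => [X /andP[XP XY] //|H].
  have [y yY] := neQ Y YQ; have yS := subsetP (subQ Y YQ) y yY.
  have [X XP yX] := covP y yS; have [Y' Y'Q XY'] := ref X XP.
  have e : Y' = Y by apply: (disQ Y' Y y) => //; exact: (subsetP XY').
  by have := H X; rewrite XP -e XY'.
have ginj : {in Q &, injective g}.
  move=> Y1 Y2 Y1Q Y2Q e.
  have [g1P g1Y] := gY Y1 Y1Q; have [g2P g2Y] := gY Y2 Y2Q.
  have [x xg] := neP _ g1P.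
  apply: (disQ Y1 Y2 x) => //; first exact: (subsetP g1Y).
  by rewrite e in xg; exact: (subsetP g2Y).
have sub : g @: Q \subset P.
  by apply/subsetP => X /imsetP[Y YQ ->]; case: (gY Y YQ).
have cQ : #|g @: Q| = #|Q| by rewrite card_in_imset.
rewrite ltn_neqAle -cQ subset_leq_card // andbT.
apply: contraNneq PQ => ceq.
have eq : g @: Q = P by apply/eqP; rewrite eqEcard sub ceq leqnn.
have gid : forall Y, Y \in Q -> g Y = Y.
  move=> Y YQ; have [gP' gsub] := gY Y YQ; apply/eqP; rewrite eqEsubset gsub /=.
  apply/subsetP => y yY; have yS := subsetP (subQ Y YQ) y yY.
  have [X XP yX] := covP y yS; move: XP; rewrite -eq => /imsetP[Y'' Y''Q eX].
  have [_ gsub''] := gY Y'' Y''Q.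
  have e : Y'' = Y by apply: (disQ Y'' Y y) => //; rewrite eX in yX; exact: (subsetP gsub'').
  by rewrite -e -eX.
rewrite eqEsubset; apply/andP; split; apply/subsetP => X.
  by rewrite -eq => /imsetP[Y YQ ->]; rewrite gid.
by move=> XQ; rewrite -eq -(gid X XQ); apply: imset_f.
Qed.

End Refine.

End MP8.
Import MP8.

Module MP9.
Set Implicit Arguments. Unset Strict Implicit. Unset Printing Implicit Defensive.

Section Split.
Variables (n : nat) (chi : 'I_n -> FB) (pi : {set {set 'I_n}}) (V : {set 'I_n}).
Hypotheses (Hpi : INC [set: 'I_n] chi pi) (HV : V \in pi)
  (VI : is_interval [set: 'I_n] V).
Implicit Types (S W X Y : {set 'I_n}) (P Q z w : {set {set 'I_n}}).

Definition sp1 z := [set X in z | X \subset V].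
Definition sp2 z := [set X in z | ~~ (X \subset V)].

Lemma INC_good S P : INC S chi P -> good S P.
Proof. by case/and3P => /partition_good. Qed.

Lemma INC_nc S P : INC S chi P -> noncrossing P.
Proof. by case/and3P. Qed.

Lemma inc_condP S P : reflect (forall X (v1 v2 w : 'I_n), X \in P -> v1 \in X -> v2 \in X ->
    w \in S -> (v1 < w)%N -> (w < v2)%N -> isB (chi w) -> w \in X) (inc_cond S chi P).
Proof.
apply: (iffP forall_inP) => H.
- move=> X v1 v2 w XP v1X v2X wS v1w wv2 Bw.
  move: (H X XP) => /forall_inP /(_ v1 v1X) /forall_inP /(_ v2 v2X) /forall_inP /(_ w wS).
  by rewrite v1w wv2 Bw => /implyP; apply.
- move=> X XP; apply/forall_inP => v1 v1X; apply/forall_inP => v2 v2X.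
  apply/forall_inP => w wS; apply/implyP => /andP[/andP[v1w wv2] Bw].
  exact: (H X v1 v2 w).
Qed.

Lemma INC_inc S P : INC S chi P -> inc_cond S chi P.
Proof. by case/and3P. Qed.

Lemma mkINC S P : good S P -> noncrossing P -> inc_cond S chi P -> INC S chi P.
Proof. by move=> g nc ic; apply/and3P; split => //; exact: good_partition. Qed.

Let gpi := INC_good Hpi.

Lemma good_disj_eq S P X Y (x : 'I_n) : good S P -> X \in P -> Y \in P -> x \in X -> x \in Y -> X = Y.
Proof. by case=> _ _ dis _; apply: dis. Qed.

Lemma pi_disj Y : Y \in pi -> Y != V -> [disjoint Y & V].
Proof. by move=> YP YV; apply: (good_disj gpi). Qed.

Lemma pi_subV Y : Y \in pi -> (Y \subset V) = (Y == V).
Proof.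
move=> YP; case: (eqVneq Y V) => [->|YV]; first exact: subxx.
have [y yY] := good_ne gpi YP; apply/negP => /subsetP /(_ y yY) yV.
by have := disjointFr (pi_disj YP YV) yY; rewrite yV.
Qed.

Lemma pr_eq : part_restrict pi (~: V) = [set X in pi | X != V].
Proof.
apply/setP => X; rewrite inE; apply/imsetP/andP.
- move=> [Y]; rewrite inE => /andP[YP Yne] ->.
  have YV : Y != V by apply: contraNneq Yne => ->; rewrite setICr.
  by rewrite -setDE (setDidPl (pi_disj YP YV)).
- move=> [XP XV]; exists X; last by rewrite -setDE (setDidPl (pi_disj XP XV)).
  rewrite inE XP -setDE (setDidPl (pi_disj XP XV)) /=.
  by have [x xX] := good_ne gpi XP; apply/set0Pn; exists x.
Qed.

Lemma sp2_pi : sp2 pi = part_restrict pi (~: V).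
Proof. by rewrite pr_eq; apply/setP => X; rewrite !inE; case XP: (X \in pi) => //=; rewrite pi_subV. Qed.

Lemma sp1_pi : sp1 pi = [set V].
Proof.
apply/setP => X; rewrite !inE; case: (eqVneq X V) => [->|XV]; first by rewrite HV subxx.
by case XP: (X \in pi) => //=; rewrite pi_subV // (negbTE XV).
Qed.

Lemma B4 z : sp1 z :|: sp2 z = z.
Proof. by apply/setP => X; rewrite !inE -andb_orr orbN andbT. Qed.

Lemma blk_side z X : refines z pi -> X \in z -> ~~ (X \subset V) -> X \subset ~: V.
Proof.
move=> /refinesP ref XP XV; have [Y YP XY] := ref X XP.
have YV : Y != V by apply: contraNneq XV => <-.
apply/subsetP => x xX; rewrite inE; apply/negP => xV.
by have := disjointFr (pi_disj YP YV) (subsetP XY x xX); rewrite xV.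
Qed.

Lemma mk_nc P : (forall X Y (a b c d : 'I_n), X \in P -> Y \in P -> a \in X -> c \in X ->
   b \in Y -> d \in Y -> (a < b)%N -> (b < c)%N -> (c < d)%N -> X = Y) -> noncrossing P.
Proof.
move=> H; apply/forall_inP => X XP; apply/forall_inP => Y YP.
apply/forallP => a; apply/forallP => b; apply/forallP => c; apply/forallP => d.
apply/implyP => /and5P[aX cX bY dY /andP[/andP[ab bc] cd]]; apply/eqP.
exact: (H X Y a b c d).
Qed.

Lemma B1 z : INC [set: 'I_n] chi z -> refines z pi ->
  [/\ INC V chi (sp1 z), INC (~: V) chi (sp2 z) & refines (sp2 z) (part_restrict pi (~: V))].
Proof.
move=> Hz ref; have gz := INC_good Hz; have ncz := INC_nc Hz.
move/inc_condP: (INC_inc Hz) => icz.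
move: (gz) => [sub ne dis cov].
split.
- apply: mkINC.
  + split.
    * by move=> X; rewrite inE => /andP[].
    * by move=> X; rewrite inE => /andP[/ne].
    * by move=> X Y x; rewrite !inE => /andP[XP _] /andP[YP _]; apply: dis.
    * move=> x xV; have [X XP xX] := cov x (in_setT x); exists X => //; rewrite inE XP /=.
      apply/negPn/negP => XV; have := subsetP (blk_side ref XP XV) x xX; by rewrite inE xV.
  + by apply: nc_sub ncz; apply/subsetP => X; rewrite inE => /andP[].
  + apply/inc_condP => X v1 v2 w; rewrite inE => /andP[XP _] v1X v2X wV.
    exact: (icz X v1 v2 w XP v1X v2X (in_setT w)).
- apply: mkINC.
  + split.
    * by move=> X; rewrite inE => /andP[XP XV]; exact: (blk_side ref XP XV).
    * by move=> X; rewrite inE => /andP[/ne].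
    * by move=> X Y x; rewrite !inE => /andP[XP _] /andP[YP _]; apply: dis.
    * move=> x; rewrite inE => xV; have [X XP xX] := cov x (in_setT x); exists X => //.
      rewrite inE XP /=; apply/negP => /subsetP /(_ x xX); by rewrite (negbTE xV).
  + by apply: nc_sub ncz; apply/subsetP => X; rewrite inE => /andP[].
  + apply/inc_condP => X v1 v2 w; rewrite inE => /andP[XP _] v1X v2X wV.
    exact: (icz X v1 v2 w XP v1X v2X (in_setT w)).
- apply/refinesP => X; rewrite inE => /andP[XP XV]; have [Y YP XY] := (refinesP _ _ ref) X XP.
  exists Y => //; rewrite pr_eq inE YP /=; apply: contraNneq XV => e.
  by rewrite -e.
Qed.

Lemma B2 z1 z2 : INC V chi z1 -> INC (~: V) chi z2 -> refines z2 (part_restrict pi (~: V)) ->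
  INC [set: 'I_n] chi (z1 :|: z2) && refines (z1 :|: z2) pi.
Proof.
move=> H1 H2 ref2.
have g1 := INC_good H1; have g2 := INC_good H2.
have nc1 := INC_nc H1; have nc2 := INC_nc H2.
move/inc_condP: (INC_inc H1) => ic1; move/inc_condP: (INC_inc H2) => ic2.
move/inc_condP: (INC_inc Hpi) => icpi.
move/intervalP: VI => VI'.
have g2' : good ([set: 'I_n] :\: V) z2 by rewrite setTD.
have gU := good_U g1 g2' (subsetT V).
have sub1 := good_sub g1; have sub2 := good_sub g2.
have inV (x : 'I_n) X : X \in z2 -> x \in X -> x \notin V.
  by move=> XP xX; have := subsetP (sub2 X XP) x xX; rewrite inE.
have pr2 Y : Y \in part_restrict pi (~: V) -> Y \in pi /\ Y != V.
  by rewrite pr_eq inE => /andP[].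
apply/andP; split.
- apply: mkINC => //.
  + apply: mk_nc => X Y a b c d; rewrite !inE => /orP[XP|XP] /orP[YP|YP] aX cX bY dY ab bc cd.
    * exact: (ncP nc1 XP YP aX cX bY dY ab bc cd).
    * have aV := subsetP (sub1 X XP) a aX; have cV := subsetP (sub1 X XP) c cX.
      have := VI' b a c (in_setT b) aV cV (ltnW ab) (ltnW bc).
      by rewrite (negbTE (inV b Y YP bY)).
    * have bV := subsetP (sub1 Y YP) b bY; have dV := subsetP (sub1 Y YP) d dY.
      have := VI' c b d (in_setT c) bV dV (ltnW bc) (ltnW cd).
      by rewrite (negbTE (inV c X XP cX)).
    * exact: (ncP nc2 XP YP aX cX bY dY ab bc cd).
  + apply/inc_condP => X v1 v2 w; rewrite inE => /orP[XP|XP] v1X v2X _ v1w wv2 Bw.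
      have v1V := subsetP (sub1 X XP) v1 v1X; have v2V := subsetP (sub1 X XP) v2 v2X.
      have wV := VI' w v1 v2 (in_setT w) v1V v2V (ltnW v1w) (ltnW wv2).
      exact: (ic1 X v1 v2 w XP v1X v2X wV v1w wv2 Bw).
    case: (boolP (w \in V)) => wV; last first.
      by apply: (ic2 X v1 v2 w XP v1X v2X) => //; rewrite inE.
    have [Y YP XY] := (refinesP _ _ ref2) X XP; have [YP' YV] := pr2 Y YP.
    have wY := icpi Y v1 v2 w YP' (subsetP XY v1 v1X) (subsetP XY v2 v2X) (in_setT w) v1w wv2 Bw.
    by have := disjointFr (pi_disj YP' YV) wY; rewrite wV.
- apply/refinesP => X; rewrite inE => /orP[XP|XP].
    by exists V => //; apply: sub1.
  by have [Y YP XY] := (refinesP _ _ ref2) X XP; exists Y => //; case: (pr2 Y YP).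
Qed.

Lemma B3 z1 z2 : INC V chi z1 -> INC (~: V) chi z2 -> sp1 (z1 :|: z2) = z1 /\ sp2 (z1 :|: z2) = z2.
Proof.
move=> H1 H2; have g1 := INC_good H1; have g2 := INC_good H2.
have n2 X : X \in z2 -> ~~ (X \subset V).
  move=> XP; have [x xX] := good_ne g2 XP; apply/negP => /subsetP /(_ x xX) xV.
  by have := subsetP (good_sub g2 XP) x xX; rewrite inE xV.
have n1 X : X \in z1 -> X \subset V by apply: good_sub g1.
split; apply/setP => X; rewrite !inE.
- case X1: (X \in z1); first by rewrite n1.
  by case X2: (X \in z2) => //=; rewrite (negbTE (n2 X X2)).
- case X2: (X \in z2); first by rewrite orbT n2.
  by case X1: (X \in z1) => //=; rewrite n1.
Qed.

Lemma ref_split z w : INC [set: 'I_n] chi z -> refines z pi ->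
  INC [set: 'I_n] chi w -> refines w pi ->
  refines z w = refines (sp1 z) (sp1 w) && refines (sp2 z) (sp2 w).
Proof.
move=> Hz rz Hw rw; have gz := INC_good Hz; have gw := INC_good Hw.
apply/idP/andP.
- move/refinesP => H; split; apply/refinesP => X; rewrite inE => /andP[XP XV];
    have [Y YP XY] := H X XP; exists Y => //; rewrite inE YP /=.
  + have [x xX] := good_ne gz XP.
    have [Z ZP YZ] := (refinesP _ _ rw) Y YP.
    have e : Z = V.
      apply: (good_disj_eq gpi ZP HV) ; [exact: (subsetP YZ x (subsetP XY x xX)) | exact: (subsetP XV x xX)].
    by rewrite -e.
  + by apply: contra XV => YV; apply: subset_trans XY YV.
- move=> [/refinesP H1 /refinesP H2]; apply/refinesP => X XP.
  have : X \in sp1 z :|: sp2 z by rewrite B4.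
  rewrite inE => /orP[/H1|/H2] [Y]; rewrite inE => /andP[YP _] XY; by exists Y.
Qed.

End Split.

End MP9.
Import MP9.

Module MP10.
Import Order.TTheory GRing.Theory Num.Theory.
Set Implicit Arguments. Unset Strict Implicit. Unset Printing Implicit Defensive.
Local Open Scope ring_scope.

Section MobSplit.
Variables (n : nat) (chi : 'I_n -> FB) (pi : {set {set 'I_n}}) (V : {set 'I_n}).
Hypotheses (Hpi : INC [set: 'I_n] chi pi) (HV : V \in pi)
  (VI : is_interval [set: 'I_n] V).
Local Notation pi' := (part_restrict pi (~: V)).
Local Notation sp1 := (sp1 V).
Local Notation sp2 := (sp2 V).

Lemma split_sum (M : nmodType) (G : {set {set 'I_n}} -> {set {set 'I_n}} -> M)
  (Q : {set {set 'I_n}} -> {set {set 'I_n}} -> bool) :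
  \sum_(z | INC [set: 'I_n] chi z && refines z pi && Q (sp1 z) (sp2 z)) G (sp1 z) (sp2 z) =
  \sum_(z1 | INC V chi z1) \sum_(z2 | INC (~: V) chi z2 && refines z2 pi' && Q z1 z2) G z1 z2.
Proof.
rewrite pair_big_dep.
rewrite (reindex_onto (fun z => (sp1 z, sp2 z)) (fun p => p.1 :|: p.2)) /=; last first.
  move=> [z1 z2] /= /andP[H1 /andP[/andP[H2 _] _]].
  by have [-> ->] := B3 H1 H2.
apply: eq_bigl => z; rewrite B4 eqxx andbT.
apply/idP/idP.
- move=> /andP[/andP[Hz rz] Qz]; have [H1 H2 H3] := B1 Hpi HV Hz rz.
  by rewrite H1 H2 H3 Qz.
- move=> /andP[H1 /andP[/andP[H2 H3] Qz]]; rewrite Qz andbT.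
  by have := B2 Hpi HV VI H1 H2 H3; rewrite B4.
Qed.

Lemma card_bound (z : {set {set 'I_n}}) : (#|z| <= #|{set {set 'I_n}}|)%N.
Proof.
apply: leq_trans (max_card _) _.
exact: (leq_card (fun x : {set 'I_n} => [set x]) (@set1_inj _)).
Qed.

Lemma Hrk_gen S : forall x y, INC S chi x -> INC S chi y -> refines x y -> x != y ->
  (#|y| < #|x|)%N.
Proof. by move=> x y Hx Hy; apply: refines_card (INC_good Hx) (INC_good Hy). Qed.

Lemma refl_gen S : forall x, INC S chi x -> refines x x.
Proof. by move=> x _; exact: refines_refl. Qed.

Lemma mob_prod z : INC [set: 'I_n] chi z -> refines z pi ->
  mobius (INC [set: 'I_n] chi) (@refines n) z pi =
  mobius (INC V chi) (@refines n) (sp1 z) [set V] *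
  mobius (INC (~: V) chi) (@refines n) (sp2 z) pi'.
Proof.
move=> Hz rz.
pose f w := mobius (INC V chi) (@refines n) (sp1 z) (sp1 w) *
            mobius (INC (~: V) chi) (@refines n) (sp2 z) (sp2 w).
rewrite -(sp1_pi Hpi HV) -(sp2_pi Hpi HV).
symmetry; rewrite /mobius.
apply: (mf_unique (@Hrk_gen _) (@refl_gen _) (@refines_trans _) (f := f) (top := pi)) => //.
- exact: card_bound.
- by rewrite /f /mobius !mf_refl mulr1.
move=> y Hy zy ypi nzy.
pose Qf w1 w2 := [&& refines (sp1 z) w1, refines w1 (sp1 y), refines (sp2 z) w2 & refines w2 (sp2 y)].
rewrite (eq_bigl (fun w => INC [set: 'I_n] chi w && refines w pi && Qf (sp1 w) (sp2 w))); last first.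
  move=> w; case Iw: (INC [set: 'I_n] chi w) => //=.
  case rw: (refines w pi) => /=.
    rewrite (ref_split Hpi HV Hz rz Iw rw) (ref_split Hpi HV Iw rw Hy ypi) /Qf.
    by case: (refines (sp1 z) (sp1 w)); case: (refines (sp2 z) (sp2 w)); case: (refines (sp1 w) (sp1 y)); case: (refines (sp2 w) (sp2 y)).
  apply/negbTE; apply: contraFN rw => /andP[_ wy]; exact: refines_trans wy ypi.
rewrite (split_sum (fun w1 w2 => mobius (INC V chi) (@refines n) (sp1 z) w1 *
            mobius (INC (~: V) chi) (@refines n) (sp2 z) w2) Qf).
pose A w1 := refines (sp1 z) w1 && refines w1 (sp1 y).
pose B w2 := refines (sp2 z) w2 && refines w2 (sp2 y).
have [Hz1 Hz2 Hz3] := B1 Hpi HV Hz rz; have [Hy1 Hy2 Hy3] := B1 Hpi HV Hy ypi.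
have := zy; rewrite (ref_split Hpi HV Hz rz Hy ypi) => /andP[zy1 zy2].
rewrite (_ : \sum_(w1 | _) _ = (\sum_(w1 | INC V chi w1 && A w1) mobius (INC V chi) (@refines n) (sp1 z) w1) *
    (\sum_(w2 | INC (~: V) chi w2 && refines w2 pi' && B w2) mobius (INC (~: V) chi) (@refines n) (sp2 z) w2)).
  case: (eqVneq (sp1 z) (sp1 y)) => [e1|n1].
    have n2 : sp2 z != sp2 y.
      apply: contraNneq nzy => e2; apply/eqP; by rewrite -(B4 V z) -(B4 V y) e1 e2.
    rewrite [X in _ * X](eq_bigl (fun w2 => [&& INC (~: V) chi w2, refines (sp2 z) w2 & refines w2 (sp2 y)])).
      have Z2 : \sum_(w2 | [&& INC (~: V) chi w2, refines (sp2 z) w2 & refines w2 (sp2 y)])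
          mobius (INC (~: V) chi) (@refines n) (sp2 z) w2 = 0.
        by apply: (mf_sum (@Hrk_gen _) (@refl_gen _) Hz2 Hy2 zy2 n2); exact: card_bound.
      by rewrite Z2 mulr0.
    move=> w2; rewrite /B; case: (INC (~: V) chi w2) => //=.
    case r2: (refines w2 (sp2 y)); last by rewrite !andbF.
    by rewrite (refines_trans r2 Hy3).
  have Z1 : \sum_(w1 | INC V chi w1 && A w1) mobius (INC V chi) (@refines n) (sp1 z) w1 = 0.
    by apply: (mf_sum (@Hrk_gen _) (@refl_gen _) Hz1 Hy1 zy1 n1); exact: card_bound.
  by rewrite Z1 mul0r.
rewrite mulr_suml big_mkcond [RHS]big_mkcond /=; apply: eq_bigr => w1 _.
case: (INC V chi w1) => //=; case Aw: (A w1) => /=.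
  rewrite mulr_sumr; apply: eq_bigl => w2; rewrite /Qf.
  by move: Aw; rewrite /A => /andP[-> ->].
apply: big_pred0 => w2; rewrite /Qf; move/negbT: Aw; rewrite /A negb_and.
by case/orP => /negbTE ->; rewrite ?andbF.
exact: refines_refl.
Qed.

End MobSplit.

End MP10.
Import MP10.

Module MP11.
Import Order.TTheory GRing.Theory Num.Theory.
Set Implicit Arguments. Unset Strict Implicit. Unset Printing Implicit Defensive.
Local Open Scope ring_scope.

Lemma addmorph_mulrz (U W : zmodType) (F : U -> W) :
  {morph F : x y / x + y} -> forall x m, F (x *~ m) = F x *~ m.
Proof.
move=> Fadd.
have F0 : F 0 = 0 by apply: (addrI (F 0)); rewrite -Fadd !addr0.
have FN x : F (- x) = - F x by apply: (addrI (F x)); rewrite -Fadd !subrr.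
have Fn x k : F (x *+ k) = F x *+ k.
  by elim: k => [|k IH]; rewrite ?mulr0n // !mulrS Fadd IH.
move=> x [k|k]; first by rewrite -!pmulrn Fn.
by rewrite NegzE !mulrNz FN -!pmulrn Fn.
Qed.

Section Key.
Variables (R : realType) (Bt A : algType R[i]).
Variable iota : {lrmorphism Bt -> A}.
Variable E : {linear A -> Bt}.
Variables (n : nat) (chi : 'I_n -> FB) (pi : {set {set 'I_n}}) (V : {set 'I_n}).
Hypotheses (Hpi : INC [set: 'I_n] chi pi) (HV : V \in pi)
  (VI : is_interval [set: 'I_n] V).
Variable a : 'I_n -> A.
Variable g : Bt -> ('I_n -> A).
Local Notation PH := (Phi iota E).
Local Notation mu1 z1 := (mobius (INC V chi) (@refines n) z1 [set V]).
Local Notation mu2 z2 := (mobius (INC (~: V) chi) (@refines n) z2 (part_restrict pi (~: V))).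
Hypothesis Hfact : forall z, INC [set: 'I_n] chi z -> refines z pi ->
  PH [set: 'I_n] z a = PH (~: V) (sp2 V z) (g (PH V (sp1 V z) a)).
Hypothesis Hadd : forall z2, INC (~: V) chi z2 -> {morph (fun b => PH (~: V) z2 (g b)) : x y / x + y}.

Lemma KEY : kappa iota E [set: 'I_n] chi pi a =
  kappa iota E (~: V) chi (part_restrict pi (~: V)) (g (kappa iota E V chi [set V] a)).
Proof.
rewrite /kappa.
rewrite (eq_bigr (fun z => PH (~: V) (sp2 V z) (g (PH V (sp1 V z) a)) *~ (mu1 (sp1 V z) * mu2 (sp2 V z)))); last first.
  by move=> z /andP[Hz rz]; rewrite Hfact // (mob_prod Hpi HV VI Hz rz).
rewrite (eq_bigl (fun z => INC [set: 'I_n] chi z && refines z pi && true)); last by move=> z; rewrite andbT.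
rewrite (split_sum Hpi HV VI (fun z1 z2 => PH (~: V) z2 (g (PH V z1 a)) *~ (mu1 z1 * mu2 z2)) (fun _ _ => true)).
have lin z2 : INC (~: V) chi z2 ->
    PH (~: V) z2 (g (\sum_(z1 | INC V chi z1 && refines z1 [set V]) PH V z1 a *~ mu1 z1)) =
    \sum_(z1 | INC V chi z1 && refines z1 [set V]) PH (~: V) z2 (g (PH V z1 a)) *~ mu1 z1.
  move=> Hz2; have Fadd := Hadd Hz2.
  have F0 : PH (~: V) z2 (g 0) = 0.
    by apply: (addrI (PH (~: V) z2 (g 0))); rewrite -Fadd !addr0.
  rewrite (big_morph _ Fadd F0); apply: eq_bigr => z1 _.
  exact: (addmorph_mulrz Fadd).
rewrite [RHS](eq_bigr (fun z2 => \sum_(z1 | INC V chi z1 && refines z1 [set V])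
    PH (~: V) z2 (g (PH V z1 a)) *~ mu1 z1 *~ mu2 z2)); last first.
  by move=> z2 /andP[Hz2 _]; rewrite lin // mulrz_suml.
rewrite exchange_big /=; apply: eq_big => [z2|z2 _]; first by rewrite andbT.
apply: eq_big => [z1|z1 _]; last by rewrite mulrzA.
case H1: (INC V chi z1) => //=; apply/esym/forall_inP => X XP; apply/exists_inP.
by exists V; rewrite ?inE //; exact: (good_sub (INC_good H1) XP).
Qed.


End Key.

End MP11.
Import MP11.

Import Order.TTheory GRing.Theory Num.Theory.
Local Open Scope ring_scope.

Theorem theorem4p2 (R : realType) (Bt A : algType R[i])
  (iota : {lrmorphism Bt -> A}) (iota_inj : injective iota)
  (E : {linear A -> Bt})
  (E_bimod : forall (b1 b2 : Bt) (x : A), E (iota b1 * x * iota b2) = b1 * E x * b2)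
  (n : nat) (chi : 'I_n -> FB) (pi : {set {set 'I_n}})
  (Hpi : INC [set: 'I_n] chi pi) (a : 'I_n -> A) (l s : nat)
  (HV : [set i : 'I_n | (l <= i < l + s)%N] \in pi) :
  let V := [set i : 'I_n | (l <= i < l + s)%N] in
  let V' := ~: V in
  let kV := kappa iota E V chi [set V] a in
  (forall j : 'I_n, nat_of_ord j = (l + s)%N ->
     kappa iota E [set: 'I_n] chi pi a
     = kappa iota E V' chi (part_restrict pi V')
         (fun i => if i == j then iota kV * a i else a i))
  /\
  (forall j : 'I_n, (nat_of_ord j).+1 = l ->
     kappa iota E [set: 'I_n] chi pi a
     = kappa iota E V' chi (part_restrict pi V')
         (fun i => if i == j then a i * iota kV else a i)).
Proof.
move=> V V' kV.
have gpi := INC_good Hpi.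
have VI : is_interval [set: 'I_n] V.
  apply/intervalP => x y z _; rewrite !inE => /andP[ly _] /andP[_ zls] yx xz.
  by rewrite (leq_trans ly yx) (leq_ltn_trans xz zls).
have [v0 v0V] := good_ne gpi HV.
have Vne : exists v, v \in V by exists v0.
have VS : V \subset [set: 'I_n] := subsetT V.
have inV (x : 'I_n) : (x \in V) = (l <= x < l + s)%N by rewrite inE.
have split_facts z : INC [set: 'I_n] chi z -> refines z pi ->
   [/\ good V (sp1 V z), noncrossing (sp1 V z), good ([set: 'I_n] :\: V) (sp2 V z),
       good V' (sp2 V z) & noncrossing z].
  move=> Hz rz; have [H1 H2 _] := B1 Hpi HV Hz rz.
  split; [exact: INC_good H1 | exact: INC_nc H1 | rewrite setTD; exact: INC_good H2 |
          exact: INC_good H2 | exact: INC_nc Hz].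
have nextV (j : 'I_n) : nat_of_ord j = (l + s)%N -> isnext [set: 'I_n] V j.
    move=> hj.
    split; first by rewrite in_setT.
    + by move=> w; rewrite inV hj => /andP[].
    + move=> x _ Hx; have := Hx v0 v0V; move: v0V; rewrite inV => /andP[lv vls] v0x.
      rewrite leqNgt hj; apply/negP => xls.
      have : x \in V by rewrite inV xls andbT; apply: leq_trans lv (ltnW v0x).
      by move/Hx; rewrite ltnn.
split.
- move=> j hj; have Vj := nextV j hj.
  have jV' : j \in V' by rewrite inE inV hj ltnn andbF.
  apply: (@KEY _ _ _ iota E n chi pi V Hpi HV VI a (fun b i => if i == j then iota b * a i else a i)).
  + move=> z Hz rz; have [g1 nc1 g2 g2' ncz] := split_facts z Hz rz.
    rewrite -{1}(B4 V z) (F_fact E_bimod a g1 nc1 g2 VS Vne VI Vj) setTD.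
    by apply: Phi_ext => // i _; rewrite /upd; case: eqP => // ->.
  + move=> z2 Hz2 x y /=; have g2 := INC_good Hz2.
    have e b : Phi iota E V' z2 (fun i => if i == j then iota b * a i else a i) =
               Phi iota E V' z2 (upd a j (iota b * a j)).
      by apply: Phi_ext => // i _; rewrite /upd; case: eqP => // ->.
    by rewrite !e rmorphD mulrDl Phi_add.
- move=> p hp.
  have pl : (p < l)%N by rewrite -hp.
  have pV' : p \in V' by rewrite inE inV negb_and -ltnNge pl.
  have lV : (l < n)%N.
    by move: v0V; rewrite inV => /andP[lv _]; apply: leq_ltn_trans lv (ltn_ord v0).
  have lin : Ordinal lV \in V.
    by move: v0V; rewrite !inV /= leqnn /= => /andP[lv vls]; apply: leq_ltn_trans lv vls.
  have Vp : isprev [set: 'I_n] V p.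
    split; first by rewrite in_setT.
    + by move=> w; rewrite inV -hp => /andP[].
    + move=> x _ Hx; have := Hx _ lin; rewrite /= -hp ltnS.
      done.
  have e b z2 : good V' z2 -> Phi iota E V' z2 (fun i => if i == p then a i * iota b else a i) =
             Phi iota E V' z2 (upd a p (a p * iota b)).
    by move=> g2; apply: Phi_ext => // i _; rewrite /upd; case: eqP => // ->.
  apply: (@KEY _ _ _ iota E n chi pi V Hpi HV VI a (fun b i => if i == p then a i * iota b else a i)).
  + move=> z Hz rz; have [g1 nc1 g2 g2' ncz] := split_facts z Hz rz.
    rewrite e //.
    case: (ltnP (l + s) n) => [lsn|nls].
      have Vj := nextV (Ordinal lsn) erefl.
      rewrite -{1}(B4 V z) (F_fact E_bimod a g1 nc1 g2 VS Vne VI Vj) setTD.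
      have C : consec V' p (Ordinal lsn).
        split => //=.
        * by rewrite inE inV ltnn andbF.
        * exact: leq_trans pl (leq_addr s l).
        * move=> x; rewrite inE inV negb_and -!ltnNge => /orP[xl|lsx]; apply/negP => /andP[px xls].
            by move: xl; rewrite -hp ltnS leqNgt px.
          by move: lsx; rewrite ltnS leqNgt xls.
      by rewrite (Adj E_bimod a _ g2' C).
    have fin : final [set: 'I_n] V.
      move=> x _ Hx; have := Hx v0 v0V; move: v0V; rewrite inV => /andP[lv vls] v0x.
      have : x \in V by rewrite inV (leq_trans lv (ltnW v0x)) /=; apply: leq_trans (ltn_ord x) nls.
      by move/Hx; rewrite ltnn.
    have ncU : noncrossing (sp1 V z :|: sp2 V z) by rewrite B4.
    by rewrite -{1}(B4 V z) (Ffin_fact E_bimod a g1 nc1 g2 ncU VS Vne VI Vp fin) setTD.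
  + move=> z2 Hz2 x y /=; have g2 := INC_good Hz2.
    by rewrite !e // rmorphD mulrDr Phi_add.
Qed.
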